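(* Let $\alpha>0$, $m>-1$, $\alpha>m$, $0<\lambda<\frac{2(\alpha-m)}{1+m}$. There is $n_1>0$ such that for every $n\in(0,n_1)$ the following holds. Let $\chi(\eta)=(p,q,r,s)(\eta)$ be a heteroclinic orbit of (S) from $M_0$ to $M_1$ with $e^{-2\eta}(\chi(\eta)-M_0)\to\kappa X_{01}$, $\kappa>0$, as $\eta\to-\infty$. Let $\Gamma_0>0$ and $U_0=a\Gamma_0$ (equivalently $\lambda=\big(\frac{U_0}{\Gamma_0}-\frac{2(1+\alpha)-n}{D}\big)\frac{D}{2(1+\alpha)}$), and set $\Theta_0=c^{-\frac1{1+\alpha}}\Gamma_0^{\frac m{1+\alpha}}U_0^{\frac{1+n}{1+\alpha}}$, $\Sigma_0=c^{\frac\alpha{1+\alpha}}\Gamma_0^{\frac m{1+\alpha}}U_0^{-\frac{\alpha-n}{1+\alpha}}$. Then there is $\eta_0\in\mathbb R$ such that, writing $(p,q,r,s)$ for the components of $\chi(\cdot-\eta_0)$ evaluated at $\eta=\log\xi$, the functions defined for $\xi>0$ by $$\Gamma=\xi^{-a_1}p^{\frac{1+\alpha}D}r^{\frac nD}s^{\frac\alpha D},\ V=\tfrac1b\xi^{-b_1}p^{-\frac{\alpha-m-n}D}q\,r^{\frac nD}s^{\frac\alpha D},\ \Theta=\xi^{-c_1}p^{\frac{1+m+n}D}r^{\frac{2n}D}s^{-\frac{1-m-n}D},$$ $$\Sigma=\xi^{-d_1}p^{-\frac{\alpha-m-n}D}r^{\frac nD}s^{\frac\alpha D},\ U=\xi^{-a_1}p^{\frac{1+\alpha}D}r^{1+\frac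 nD}s^{\frac\alpha D}$$ solve $V'=U$, $\Sigma'=bV+\lambda\xi U$, $c\Theta+\lambda\xi\Theta'=\Sigma U$, $a\Gamma+\lambda\xi\Gamma'=U$, $\Sigma=\Theta^{-\alpha}\Gamma^mU^n$ on $(0,\infty)$ and satisfy: (i) they extend to $\xi=0$ with $V(0)=\Gamma'(0)=\Theta'(0)=\Sigma'(0)=U'(0)=0$, $\Gamma(0)=\Gamma_0$, $U(0)=U_0$, $\Theta(0)=\Theta_0$, $\Sigma(0)=\Sigma_0$; (ii) as $\xi\to0$: $\Gamma-\Gamma_0=\Gamma''(0)\frac{\xi^2}2+o(\xi^2)$ with $\Gamma''(0)<0$; $\Theta-\Theta_0=\Theta''(0)\frac{\xi^2}2+o(\xi^2)$ with $\Theta''(0)<0$; $\Sigma-\Sigma_0=\Sigma''(0)\frac{\xi^2}2+o(\xi^2)$ with $\Sigma''(0)=(b+\lambda)U_0>0$; $U-U_0=U''(0)\frac{\xi^2}2+o(\xi^2)$ with $U''(0)<0$; $V-U_0\xi=U''(0)\frac{\xi^3}6+o(\xi^3)$; (iii) as $\xi\to\infty$: if $\frac{1+m+n}{\alpha-m-n}\ne1$, or $\frac{1+m+n}{\alpha-m-n}=1$ and $b=\lambda$, then $\Gamma,U=O(\xi^{-\frac{1+\alpha}{\alpha-m-n}})$, $V=O(1)$, $\Theta=O(\xi^{-\frac{1+m+n}{\alpha-m-n}})$, $\Sigma=O(\xi)$; otherwise $\Gamma,U=O(\xi^{-\frac{1+\alpha}{\alpha-m-n}}(\log\xi)^{\frac{1+\alpha}D})$,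 $V=O((\log\xi)^{-\frac{\alpha-m-n}D})$, $\Theta=O(\xi^{-\frac{1+m+n}{\alpha-m-n}}(\log\xi)^{\frac{1+m+n}D})$, $\Sigma=O(\xi(\log\xi)^{-\frac{\alpha-m-n}D})$.
   Context: $D=1+2\alpha-m-n$, $a=\frac{2+2\alpha-n}{D}+\frac{2(1+\alpha)}{D}\lambda$, $b=\frac{1+m}{D}+\frac{1+m+n}{D}\lambda$, $c=\frac{2(1+m)}{D}+\frac{2(1+m+n)}{D}\lambda$; $a_1=\frac{2(1+\alpha)}D$, $b_1=\frac{1+m+n}D$, $c_1=\frac{2(1+m+n)}D$, $d_1=\frac{2(-\alpha+m+n)}D$. System (S): $\dot p=p(\frac1\lambda(r-a)+2-\lambda pr-q)$, $\dot q=q(1-\lambda pr-q)+bpr$, $n\dot r=r(\frac{\alpha-m-n}{\lambda(1+\alpha)}(r-a)+\lambda pr+q+\frac\alpha\lambda r(s-\frac{1+m+n}{1+\alpha})+\frac{n\alpha}{\lambda(1+\alpha)})$, $\dot s=s(\frac{\alpha-m-n}{\lambda(1+\alpha)}(r-a)+\lambda pr+q-\frac1\lambda r(s-\frac{1+m+n}{1+\alpha})-\frac{n}{\lambda(1+\alpha)})$. $M_0=(0,0,r_0,s_0)$, $r_0=a$, $s_0=\frac{1+m+n}{1+\alpha}-\frac{n}{(1+\alpha)r_0}$; $M_1=(0,1,r_1,s_1)$, $r_1=a-\frac{1+\alpha}{\alpha-m-n}\lambda$, $s_1=\frac{1+m+n}{1+\alpha}-\frac{n}{(1+\alpha)r_1}$.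 $X_{01}=(1,br_0,y_1,z_1)^T$ with $y_1=-(\lambda+b)r_0\frac{\frac{1+\alpha}\lambda r_0+\frac2{s_0}}{\Delta_1}$, $z_1=-(\lambda+b)r_0\frac{\frac n{r_0}(\frac1\lambda+2)}{\Delta_1}$, $\Delta_1=\frac{1-s_0}\lambda(\frac{1+\alpha}\lambda r_0+\frac2{s_0})-\frac n{r_0}(\frac1\lambda+2)(\frac{r_0}\lambda+\frac2{s_0})$; it is the eigenvector of the Jacobian of (S) at $M_0$ for eigenvalue 2. $O(\cdot)$ refers to $\xi\to\infty$. *)

(* Defs.v *)
From Stdlib Require Import Reals.
Open Scope R_scope.

Definition Dd (al m n : R) : R := 1 + 2*al - m - n.
Definition aa (al m n lam : R) : R :=
  (2 + 2*al - n) / Dd al m n + 2*(1+al) / Dd al m n * lam.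
Definition bb (al m n lam : R) : R :=
  (1+m) / Dd al m n + (1+m+n) / Dd al m n * lam.
Definition cc (al m n lam : R) : R :=
  2*(1+m) / Dd al m n + 2*(1+m+n) / Dd al m n * lam.
Definition a1 (al m n : R) : R := 2*(1+al) / Dd al m n.
Definition b1 (al m n : R) : R := (1+m+n) / Dd al m n.
Definition c1 (al m n : R) : R := 2*(1+m+n) / Dd al m n.
Definition d1 (al m n : R) : R := 2*(-al+m+n) / Dd al m n.

Definition Fp (al m n lam p q r s : R) : R :=
  p * (1/lam * (r - aa al m n lam) + 2 - lam*p*r - q).
Definition Fq (al m n lam p q r s : R) : R :=
  q * (1 - lam*p*r - q) + bb al m n lam * p * r.
(* right-hand side of  n r' = ... *)
Definition Fr_rhs (al m n lam p q r s : R) : R :=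
  r * ((al-m-n)/(lam*(1+al)) * (r - aa al m n lam) + lam*p*r + q
       + al/lam * r * (s - (1+m+n)/(1+al)) + n*al/(lam*(1+al))).
Definition Fs (al m n lam p q r s : R) : R :=
  s * ((al-m-n)/(lam*(1+al)) * (r - aa al m n lam) + lam*p*r + q
       - 1/lam * r * (s - (1+m+n)/(1+al)) - n/(lam*(1+al))).

(* ---------- equilibria M0 = (0,0,r0,s0), M1 = (0,1,r1,s1) ---------- *)
Definition r0 (al m n lam : R) : R := aa al m n lam.
Definition s0 (al m n lam : R) : R :=
  (1+m+n)/(1+al) - n/((1+al) * r0 al m n lam).
Definition r1 (al m n lam : R) : R :=
  aa al m n lam - (1+al)/(al-m-n) * lam.
Definition s1 (al m n lam : R) : R :=
  (1+m+n)/(1+al) - n/((1+al) * r1 al m n lam).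

(* ---------- eigenvector X01 = (1, b r0, y1, z1) ---------- *)
Definition Delta1 (al m n lam : R) : R :=
  let r := r0 al m n lam in let s := s0 al m n lam in
  (1 - s)/lam * ((1+al)/lam * r + 2/s)
  - n/r * (1/lam + 2) * (r/lam + 2/s).
Definition y1 (al m n lam : R) : R :=
  let r := r0 al m n lam in let s := s0 al m n lam in
  - (lam + bb al m n lam) * r * (((1+al)/lam * r + 2/s) / Delta1 al m n lam).
Definition z1 (al m n lam : R) : R :=
  let r := r0 al m n lam in
  - (lam + bb al m n lam) * r * ((n/r * (1/lam + 2)) / Delta1 al m n lam).

Definition lim_minfty (f : R -> R) (l : R) : Prop :=
  forall eps, 0 < eps -> exists M, forall x, x < M -> Rabs (f x - l) < eps.
Definition lim_pinfty (f : R -> R) (l : R) : Prop :=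
  forall eps, 0 < eps -> exists M, forall x, M < x -> Rabs (f x - l) < eps.
Definition rlim0 (f : R -> R) (l : R) : Prop :=
  limit1_in f (fun x => 0 < x) l 0.
Definition bigO_infty (f g : R -> R) : Prop :=
  exists C M, forall x, M < x -> Rabs (f x) <= C * Rabs (g x).

Definition solves_S (al m n lam : R) (p q r s : R -> R) : Prop :=
  forall eta,
    derivable_pt_lim p eta (Fp al m n lam (p eta) (q eta) (r eta) (s eta)) /\
    derivable_pt_lim q eta (Fq al m n lam (p eta) (q eta) (r eta) (s eta)) /\
    derivable_pt_lim r eta (Fr_rhs al m n lam (p eta) (q eta) (r eta) (s eta) / n) /\
    derivable_pt_lim s eta (Fs al m n lam (p eta) (q eta) (r eta) (s eta)).

Definition heteroclinic_M0_M1 (al m n lam : R) (p q r s : R -> R) : Prop :=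
  solves_S al m n lam p q r s /\
  lim_minfty p 0 /\ lim_minfty q 0 /\
  lim_minfty r (r0 al m n lam) /\ lim_minfty s (s0 al m n lam) /\
  lim_pinfty p 0 /\ lim_pinfty q 1 /\
  lim_pinfty r (r1 al m n lam) /\ lim_pinfty s (s1 al m n lam).

Definition leaves_M0_along_X01 (al m n lam kappa : R) (p q r s : R -> R) : Prop :=
  lim_minfty (fun eta => exp (-2*eta) * (p eta - 0)) (kappa * 1) /\
  lim_minfty (fun eta => exp (-2*eta) * (q eta - 0))
             (kappa * (bb al m n lam * r0 al m n lam)) /\
  lim_minfty (fun eta => exp (-2*eta) * (r eta - r0 al m n lam))
             (kappa * y1 al m n lam) /\
  lim_minfty (fun eta => exp (-2*eta) * (s eta - s0 al m n lam))
             (kappa * z1 al m n lam).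

Definition at_log (f : R -> R) (eta0 xi : R) : R := f (ln xi - eta0).

Definition GammaF al m n (p r s : R -> R) eta0 xi : R :=
  Rpower xi (- a1 al m n) * Rpower (at_log p eta0 xi) ((1+al)/Dd al m n)
  * Rpower (at_log r eta0 xi) (n/Dd al m n) * Rpower (at_log s eta0 xi) (al/Dd al m n).
Definition VF al m n lam (p q r s : R -> R) eta0 xi : R :=
  / bb al m n lam * Rpower xi (- b1 al m n)
  * Rpower (at_log p eta0 xi) (-(al-m-n)/Dd al m n) * at_log q eta0 xi
  * Rpower (at_log r eta0 xi) (n/Dd al m n) * Rpower (at_log s eta0 xi) (al/Dd al m n).
Definition ThetaF al m n (p r s : R -> R) eta0 xi : R :=
  Rpower xi (- c1 al m n) * Rpower (at_log p eta0 xi) ((1+m+n)/Dd al m n)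
  * Rpower (at_log r eta0 xi) (2*n/Dd al m n)
  * Rpower (at_log s eta0 xi) (-(1-m-n)/Dd al m n).
Definition SigmaF al m n (p r s : R -> R) eta0 xi : R :=
  Rpower xi (- d1 al m n) * Rpower (at_log p eta0 xi) (-(al-m-n)/Dd al m n)
  * Rpower (at_log r eta0 xi) (n/Dd al m n) * Rpower (at_log s eta0 xi) (al/Dd al m n).
Definition UF al m n (p r s : R -> R) eta0 xi : R :=
  Rpower xi (- a1 al m n) * Rpower (at_log p eta0 xi) ((1+al)/Dd al m n)
  * Rpower (at_log r eta0 xi) (1 + n/Dd al m n) * Rpower (at_log s eta0 xi) (al/Dd al m n).

(* behaviour at 0 of an even-type profile X with derivative dX:
   X(0)=X0, X'(0)=0, X''(0)=X2 (one-sided), X - X0 = X2 xi^2/2 + o(xi^2) *)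
Definition expansion0 (X dX : R -> R) (X0 X2 : R) : Prop :=
  rlim0 X X0 /\
  rlim0 (fun xi => (X xi - X0) / xi) 0 /\
  rlim0 (fun xi => (dX xi - 0) / xi) X2 /\
  rlim0 (fun xi => (X xi - X0 - X2 * xi^2 / 2) / xi^2) 0.

(* Main.v *)
Require Import Defs.
From Stdlib Require Import Reals Lra Field.
From Coquelicot Require Import Coquelicot.
Open Scope R_scope.

Definition FL (F : (R -> Prop) -> Prop) (f : R -> R) (l : R) := filterlim f F (locally l).


Lemma FL_const {F : (R -> Prop) -> Prop} {FF : Filter F} c : FL F (fun _ => c) c.
Proof. apply filterlim_const. Qed.

Lemma FL_plus {F : (R -> Prop) -> Prop} {FF : Filter F} f g l1 l2 : FL F f l1 -> FL F g l2 -> FL F (fun x => f x + g x) (l1 + l2).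
Proof. intros H1 H2. apply (filterlim_comp_2 f g Rplus H1 H2). apply (filterlim_plus l1 l2). Qed.

Lemma FL_mult {F : (R -> Prop) -> Prop} {FF : Filter F} f g l1 l2 : FL F f l1 -> FL F g l2 -> FL F (fun x => f x * g x) (l1 * l2).
Proof. intros H1 H2. apply (filterlim_comp_2 f g Rmult H1 H2). apply (filterlim_mult l1 l2). Qed.

Lemma FL_comp {F : (R -> Prop) -> Prop} {FF : Filter F} f g l : FL F f l -> continuous g l -> FL F (fun x => g (f x)) (g l).
Proof. intros H1 H2. eapply filterlim_comp; eauto. Qed.

Lemma FL_opp {F : (R -> Prop) -> Prop} {FF : Filter F} f l : FL F f l -> FL F (fun x => - f x) (- l).
Proof. intros H. apply (FL_comp f Ropp l H). apply (filterlim_opp l). Qed.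

Lemma FL_minus {F : (R -> Prop) -> Prop} {FF : Filter F} f g l1 l2 : FL F f l1 -> FL F g l2 -> FL F (fun x => f x - g x) (l1 - l2).
Proof. intros. apply FL_plus; auto. apply FL_opp; auto. Qed.

Lemma FL_inv {F : (R -> Prop) -> Prop} {FF : Filter F} f l : FL F f l -> l <> 0 -> FL F (fun x => / f x) (/ l).
Proof. intros H Hl. apply (FL_comp f Rinv l H). apply continuous_Rinv; auto. Qed.

Lemma FL_exp {F : (R -> Prop) -> Prop} {FF : Filter F} f l : FL F f l -> FL F (fun x => exp (f x)) (exp l).
Proof. intros H. apply (FL_comp f exp l H). apply continuous_exp. Qed.

Lemma FL_ln {F : (R -> Prop) -> Prop} {FF : Filter F} f l : FL F f l -> 0 < l -> FL F (fun x => ln (f x)) (ln l).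
Proof. intros H Hl. apply (FL_comp f ln l H). apply continuous_ln; auto. Qed.

Lemma FL_ext {F : (R -> Prop) -> Prop} {FF : Filter F} f g l : F (fun x => f x = g x) -> FL F f l -> FL F g l.
Proof. intros. eapply filterlim_ext_loc; eauto. Qed.

Lemma FL_ext_eq {F : (R -> Prop) -> Prop} {FF : Filter F} f g l1 l2 : (forall x, f x = g x) -> l1 = l2 -> FL F f l1 -> FL F g l2.
Proof. intros H E H1. subst. apply (FL_ext f g). apply filter_forall; auto. auto. Qed.

Lemma FL_gt {F : (R -> Prop) -> Prop} {FF : Filter F} f l c : FL F f l -> c < l -> F (fun x => c < f x).
Proof. intros H Hc.
  assert (Hp : 0 < l - c) by lra.
  pose proof (proj1 (filterlim_locally f l) H (mkposreal _ Hp)) as H2.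
  eapply filter_imp; [|exact H2]. simpl. intros x Hx.
  unfold ball in Hx; simpl in Hx; unfold AbsRing_ball, abs, minus, plus, opp in Hx; simpl in Hx.
  apply Rabs_def2 in Hx. lra. Qed.

Lemma FL_lt {F : (R -> Prop) -> Prop} {FF : Filter F} f l c : FL F f l -> l < c -> F (fun x => f x < c).
Proof. intros H Hc. pose proof (FL_gt (fun x => - f x) (-l) (-c) (FL_opp f l H)) as H2.
  eapply filter_imp; [|apply H2; lra]. simpl; intros; lra. Qed.

Lemma FL_abs_lt {F : (R -> Prop) -> Prop} {FF : Filter F} f l eps : FL F f l -> 0 < eps -> F (fun x => Rabs (f x - l) < eps).
Proof. intros H Hc.
  pose proof (proj1 (filterlim_locally f l) H (mkposreal _ Hc)) as H2.
  eapply filter_imp; [|exact H2]. simpl. intros x Hx.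
  unfold ball in Hx; simpl in Hx; unfold AbsRing_ball, abs, minus, plus, opp in Hx; simpl in Hx. exact Hx. Qed.

Lemma FL_intro {F : (R -> Prop) -> Prop} {FF : Filter F} f l : (forall eps, 0 < eps -> F (fun x => Rabs (f x - l) < eps)) -> FL F f l.
Proof. intros H. apply filterlim_locally. intros eps.
  eapply filter_imp; [|apply (H eps (cond_pos eps))]. intros x Hx.
  unfold ball; simpl; unfold AbsRing_ball, abs, minus, plus, opp; simpl. exact Hx. Qed.

Lemma lim_minfty_FL f l : lim_minfty f l -> FL (Rbar_locally m_infty) f l.
Proof. intros H. apply FL_intro. intros eps He. destruct (H eps He) as [M HM]. exists M. auto. Qed.
Lemma lim_pinfty_FL f l : lim_pinfty f l -> FL (Rbar_locally p_infty) f l.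
Proof. intros H. apply FL_intro. intros eps He. destruct (H eps He) as [M HM]. exists M. auto. Qed.
Lemma FL_rlim0 f l : FL (at_right 0) f l -> rlim0 f l.
Proof. intros H eps He. pose proof (FL_abs_lt f l eps H He) as [d Hd].
  exists d. split. apply cond_pos. intros x [Hx1 Hx2]. simpl in Hx2. unfold R_dist in Hx2. simpl.
  apply Hd; auto. Qed.
Lemma rlim0_FL f l : rlim0 f l -> FL (at_right 0) f l.
Proof. intros H. apply FL_intro. intros eps He. destruct (H eps He) as [d [Hd Hd2]].
  exists (mkposreal d Hd). intros y Hy Hy0. apply (Hd2 y). split; auto.
  Qed.

Lemma ln_to_minfty eta0 : filterlim (fun x => ln x - eta0) (at_right 0) (Rbar_locally m_infty).
Proof. intros P [M HM]. exists (mkposreal (exp (M + eta0)) (exp_pos _)). intros y Hy Hy0.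
  apply HM. unfold ball in Hy; simpl in Hy; unfold AbsRing_ball, abs, minus, plus, opp in Hy; simpl in Hy.
  change (Rabs (y - 0) < exp (M + eta0)) in Hy. rewrite Rminus_0_r in Hy. rewrite Rabs_right in Hy by lra.
  assert (ln y < M + eta0). { rewrite <- (ln_exp (M+eta0)). apply ln_increasing; auto. } lra. Qed.
Lemma ln_to_pinfty eta0 : filterlim (fun x => ln x - eta0) (Rbar_locally p_infty) (Rbar_locally p_infty).
Proof. intros P [M HM]. exists (exp (M + eta0)). intros y Hy.
  apply HM. assert (ln (exp (M+eta0)) < ln y). { apply ln_increasing; auto. apply exp_pos. }
  rewrite ln_exp in H. lra. Qed.

Lemma FL_compose {F G} f g l : filterlim f F G -> FL G g l -> FL F (fun x => g (f x)) l.
Proof. intros. eapply filterlim_comp; eauto. Qed.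

Lemma FLl_id x : FL (locally x) (fun y => y) x. Proof. apply filterlim_id. Qed.
Ltac flstep := first [ assumption | apply FLl_id | apply FL_const | apply FL_plus | apply FL_minus | apply FL_mult | apply FL_opp | apply FL_inv ].
Ltac fl := unfold Rdiv; repeat flstep.

Definition Good (al m lam n : R) : Prop :=
  0 < Dd al m n /\ 0 < al - m - n /\ 0 < aa al m n lam /\ 0 < bb al m n lam /\
  0 < s0 al m n lam /\ 0 < Delta1 al m n lam /\ 0 < r1 al m n lam /\ 0 < s1 al m n lam /\
  1 + m + n <> al - m - n.

Lemma exists_n1 al m lam (Hal : 0 < al) (Hm : -1 < m) (Halm : m < al)
  (Hlam0 : 0 < lam) (Hlam1 : lam < 2*(al - m)/(1 + m)) :
  exists n1, 0 < n1 /\ forall n, 0 < n < n1 -> Good al m lam n.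
Proof.
  assert (HD0 : Dd al m 0 = 1 + 2*al - m) by (unfold Dd; ring).
  assert (HDp : 0 < Dd al m 0) by lra.
  assert (HDn : Dd al m 0 <> 0) by lra.
  assert (Hl : lam <> 0) by lra.
  assert (H1a : 1 + al <> 0) by lra.
  assert (Ha0 : 0 < aa al m 0 lam).
  { unfold aa. rewrite HD0. unfold Rdiv. assert (0 < / (1+2*al-m)) by (apply Rinv_0_lt_compat; lra).
    assert (0 < (2 + 2*al - 0) * / (1 + 2*al - m)) by (apply Rmult_lt_0_compat; lra).
    assert (0 < 2*(1+al) * / (1 + 2*al - m) * lam) by (repeat apply Rmult_lt_0_compat; lra). lra. }
  assert (Hb0 : 0 < bb al m 0 lam).
  { unfold bb. rewrite HD0. unfold Rdiv. assert (0 < / (1+2*al-m)) by (apply Rinv_0_lt_compat; lra).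
    assert (0 < (1+m) * / (1 + 2*al - m)) by (apply Rmult_lt_0_compat; lra).
    assert (0 < (1+m+0) * / (1 + 2*al - m) * lam) by (repeat apply Rmult_lt_0_compat; lra). lra. }
  assert (Hs00 : s0 al m 0 lam = (1+m)/(1+al)).
  { unfold s0, r0. field. split; lra. }
  assert (Hs0p : 0 < s0 al m 0 lam). { rewrite Hs00. apply Rdiv_lt_0_compat; lra. }
  assert (Hs0lt1 : s0 al m 0 lam < 1). { rewrite Hs00. apply (Rmult_lt_reg_r (1+al)). lra. unfold Rdiv. rewrite Rmult_assoc, Rinv_l by lra. lra. }
  assert (HDe0 : 0 < Delta1 al m 0 lam).
  { unfold Delta1. fold (r0 al m 0 lam). fold (s0 al m 0 lam).
    replace (0 / r0 al m 0 lam) with 0 by (unfold Rdiv; ring).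
    assert (0 < r0 al m 0 lam) by (unfold r0; auto).
    assert (0 < (1 + al)/lam * r0 al m 0 lam + 2 / s0 al m 0 lam).
    { assert (0 < (1+al)/lam) by (apply Rdiv_lt_0_compat; lra).
      assert (0 < 2 / s0 al m 0 lam) by (apply Rdiv_lt_0_compat; lra).
      assert (0 < (1 + al)/lam * r0 al m 0 lam) by (apply Rmult_lt_0_compat; lra). lra. }
    assert (0 < (1 - s0 al m 0 lam)/lam) by (apply Rdiv_lt_0_compat; lra).
    assert (0 < (1 - s0 al m 0 lam) / lam * ((1 + al) / lam * r0 al m 0 lam + 2 / s0 al m 0 lam)) by (apply Rmult_lt_0_compat; lra).
    lra. }
  assert (Hr10 : 0 < r1 al m 0 lam).
  { assert (E : r1 al m 0 lam = (1+al)*(2*(al-m) - lam*(1+m)) / ((1+2*al-m)*(al-m))).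
    { unfold r1, aa. rewrite HD0. field. split; lra. }
    rewrite E. apply Rdiv_lt_0_compat.
    - apply Rmult_lt_0_compat. lra.
      assert (lam * (1+m) < 2*(al-m)).
      { apply (Rmult_lt_compat_r (1+m)) in Hlam1; [|lra]. unfold Rdiv in Hlam1.
        rewrite Rmult_assoc, Rinv_l in Hlam1 by lra. lra. } lra.
    - apply Rmult_lt_0_compat; lra. }
  assert (Hs10 : s1 al m 0 lam = (1+m)/(1+al)).
  { unfold s1. field. split; lra. }
  assert (Hs1p : 0 < s1 al m 0 lam). { rewrite Hs10. apply Rdiv_lt_0_compat; lra. }

  assert (cD : FL (locally 0) (fun n => Dd al m n) (Dd al m 0)) by (unfold Dd; fl).
  assert (cE : FL (locally 0) (fun n => al - m - n) (al - m - 0)) by fl.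
  assert (ca : FL (locally 0) (fun n => aa al m n lam) (aa al m 0 lam)) by (unfold aa; fl).
  assert (cb : FL (locally 0) (fun n => bb al m n lam) (bb al m 0 lam)) by (unfold bb; fl).
  assert (cr0 : FL (locally 0) (fun n => r0 al m n lam) (r0 al m 0 lam)) by (unfold r0; fl).
  assert (Hr0n : r0 al m 0 lam <> 0) by (unfold r0; lra).
  assert (H1an : (1+al) * r0 al m 0 lam <> 0) by (apply Rmult_integral_contrapositive; split; lra).
  assert (cs0 : FL (locally 0) (fun n => s0 al m n lam) (s0 al m 0 lam)) by (unfold s0; fl).
  assert (Hs0n : s0 al m 0 lam <> 0) by lra.
  assert (cDe : FL (locally 0) (fun n => Delta1 al m n lam) (Delta1 al m 0 lam)) by (unfold Delta1; fl).
  assert (Hem : al - m - 0 <> 0) by lra.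
  assert (cr1 : FL (locally 0) (fun n => r1 al m n lam) (r1 al m 0 lam)) by (unfold r1; fl).
  assert (Hr1n : (1+al) * r1 al m 0 lam <> 0) by (apply Rmult_integral_contrapositive; split; lra).
  assert (cs1 : FL (locally 0) (fun n => s1 al m n lam) (s1 al m 0 lam)) by (unfold s1; fl).
  pose proof (FL_gt _ _ 0 cD HDp) as e1.
  pose proof (FL_gt _ _ 0 cE ltac:(lra)) as e2.
  pose proof (FL_gt _ _ 0 ca Ha0) as e3.
  pose proof (FL_gt _ _ 0 cb Hb0) as e4.
  pose proof (FL_gt _ _ 0 cs0 Hs0p) as e5.
  pose proof (FL_gt _ _ 0 cDe HDe0) as e6.
  pose proof (FL_gt _ _ 0 cr1 Hr10) as e7.
  pose proof (FL_gt _ _ 0 cs1 Hs1p) as e8.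
  pose proof (filter_and _ _ e1 (filter_and _ _ e2 (filter_and _ _ e3 (filter_and _ _ e4
     (filter_and _ _ e5 (filter_and _ _ e6 (filter_and _ _ e7 e8))))))) as [d Hd].
  set (kb := if Rle_dec (al - 1 - 2*m) 0 then 1 else (al - 1 - 2*m)/2).
  assert (Hkb : 0 < kb /\ forall n, 0 < n < kb -> 1 + m + n <> al - m - n).
  { unfold kb. destruct (Rle_dec (al - 1 - 2*m) 0).
    - split. lra. intros n0 Hn0. lra.
    - split. lra. intros n0 Hn0. lra. }
  exists (Rmin d kb). split.
  { apply Rmin_pos. apply cond_pos. tauto. }
  intros n Hn.
  assert (Hnd : n < d) by (pose proof (Rmin_l d kb); lra).
  assert (Hnk : n < kb) by (pose proof (Rmin_r d kb); lra).
  assert (Hb : ball 0 d n).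
  { unfold ball; simpl; unfold AbsRing_ball, abs, minus, plus, opp; simpl.
    rewrite Rabs_right; lra. }
  destruct (Hd n Hb) as (g1 & g2 & g3 & g4 & g5 & g6 & g7 & g8).
  unfold Good. repeat split; auto. apply (proj2 Hkb). lra. Qed.

Lemma Good_y1z1 al m lam n : 0 < al -> -1 < m -> 0 < lam -> 0 < n -> Good al m lam n ->
  y1 al m n lam < 0 /\ z1 al m n lam < 0.
Proof.
  intros Hal Hm Hl Hn (g1 & g2 & g3 & g4 & g5 & g6 & g7 & g8 & g9).
  assert (Hr0 : 0 < r0 al m n lam) by (unfold r0; auto).
  assert (0 < lam + bb al m n lam) by lra.
  split.
  - unfold y1. fold (r0 al m n lam) (s0 al m n lam).
    assert (0 < ((1 + al) / lam * r0 al m n lam + 2 / s0 al m n lam) / Delta1 al m n lam).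
    { apply Rdiv_lt_0_compat; auto.
      assert (0 < (1+al)/lam) by (apply Rdiv_lt_0_compat; lra).
      assert (0 < 2 / s0 al m n lam) by (apply Rdiv_lt_0_compat; lra).
      assert (0 < (1 + al)/lam * r0 al m n lam) by (apply Rmult_lt_0_compat; lra). lra. }
    assert (0 < (lam + bb al m n lam) * r0 al m n lam * (((1 + al) / lam * r0 al m n lam + 2 / s0 al m n lam) / Delta1 al m n lam)).
    { apply Rmult_lt_0_compat; [apply Rmult_lt_0_compat|]; auto. } lra.
  - unfold z1. fold (r0 al m n lam).
    assert (0 < (n / r0 al m n lam * (1 / lam + 2)) / Delta1 al m n lam).
    { apply Rdiv_lt_0_compat; auto. apply Rmult_lt_0_compat. apply Rdiv_lt_0_compat; auto.
      assert (0 < 1/lam) by (apply Rdiv_lt_0_compat; lra). lra. }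
    assert (0 < (lam + bb al m n lam) * r0 al m n lam * ((n / r0 al m n lam * (1 / lam + 2)) / Delta1 al m n lam)).
    { apply Rmult_lt_0_compat; [apply Rmult_lt_0_compat|]; auto. } lra.
Qed.

Lemma D_plus (f : R -> R) (g : R -> R) (x : R) (a : R) (b : R) : is_derive f x a -> is_derive g x b -> is_derive (fun y => f y + g y) x (a + b).
Proof. intros. apply (is_derive_plus f g x a b); auto. Qed.
Lemma D_minus (f : R -> R) (g : R -> R) (x : R) (a : R) (b : R) : is_derive f x a -> is_derive g x b -> is_derive (fun y => f y - g y) x (a - b).
Proof. intros. apply (is_derive_minus f g x a b); auto. Qed.
Lemma D_mult (f : R -> R) (g : R -> R) (x : R) (a : R) (b : R) : is_derive f x a -> is_derive g x b -> is_derive (fun y => f y * g y) x (a * g x + f x * b).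
Proof. intros. apply (is_derive_mult f g x a b); auto. intros; apply Rmult_comm. Qed.
Lemma D_scal (c : R) (f : R -> R) (x : R) (a : R) : is_derive f x a -> is_derive (fun y => c * f y) x (c * a).
Proof. intros. apply (is_derive_scal f x c a); auto. Qed.
Lemma D_const (c : R) (x : R) : is_derive (fun _ => c) x 0.
Proof. apply (is_derive_const c x). Qed.
Lemma D_id (x : R) : is_derive (fun y => y) x 1.
Proof. apply (is_derive_id x). Qed.
Lemma D_comp (f : R -> R) (g : R -> R) (x : R) (a : R) (b : R) : is_derive f x a -> is_derive g (f x) b -> is_derive (fun y => g (f y)) x (b * a).
Proof. intros. rewrite Rmult_comm. apply (is_derive_comp g f x b a); auto. Qed.
Lemma D_exp (f : R -> R) (x : R) (a : R) : is_derive f x a -> is_derive (fun y => exp (f y)) x (exp (f x) * a).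
Proof. intros. apply (D_comp f exp x a); auto. apply is_derive_exp. Qed.
Lemma D_ln (f : R -> R) (x a : R) : is_derive f x a -> 0 < f x -> is_derive (fun y => ln (f y)) x (/ f x * a).
Proof. intros. apply (D_comp f ln x a); auto. apply is_derive_ln; auto. Qed.
Lemma D_eq (f : R -> R) (x : R) (a : R) (b : R) : is_derive f x a -> a = b -> is_derive f x b.
Proof. intros; subst; auto. Qed.
Lemma D_ext (f : R -> R) (g : R -> R) (x : R) (a : R) : (forall y, f y = g y) -> is_derive f x a -> is_derive g x a.
Proof. intros. apply (is_derive_ext f g); auto. Qed.
Lemma D_of (f : R -> R) (x : R) (a : R) : derivable_pt_lim f x a -> is_derive f x a.
Proof. apply is_derive_Reals. Qed.
Lemma D_to (f : R -> R) (x : R) (a : R) : is_derive f x a -> derivable_pt_lim f x a.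
Proof. apply is_derive_Reals. Qed.
Lemma D_cont (f : R -> R) (x : R) (a : R) : is_derive f x a -> continuous f x.
Proof. intros H. apply (ex_derive_continuous (K:=R_AbsRing) (V:=R_NormedModule)). exists a. exact H. Qed.

Lemma pos_ode (f g h : R -> R) :
  (forall x, is_derive f x (f x * g x + h x)) -> (forall x, continuous g x) ->
  (forall x, 0 <= h x) -> (exists M, forall x, x < M -> 0 < f x) -> forall x, 0 < f x.
Proof.
  intros Hf Hg Hh [M HM] x0.
  set (x1 := Rmin x0 (M - 1)).
  assert (Hx1 : 0 < f x1) by (apply HM; unfold x1; pose proof (Rmin_r x0 (M-1)); lra).
  set (G := fun y => RInt g x1 y).
  assert (HG : forall y, is_derive G y (g y)).
  { intros y. apply (is_derive_RInt g G x1). apply filter_forall. intros b. apply (RInt_correct (V:=R_CompleteNormedModule)).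
    apply ex_RInt_continuous. intros; auto. auto. }
  set (W := fun y => f y * exp (- G y)).
  assert (HW : forall y, is_derive W y (h y * exp (- G y))).
  { intros y. unfold W. eapply D_eq. apply D_mult. apply Hf. apply D_exp. apply (is_derive_opp G y (g y)). apply HG.
    simpl. unfold opp; simpl. ring. }
  assert (HW1 : W x1 = f x1). { unfold W, G. rewrite RInt_point. simpl. unfold zero; simpl. rewrite Ropp_0, exp_0. ring. }
  assert (HWle : W x1 <= W x0).
  { destruct (Req_dec x1 x0) as [E|E]. rewrite E; lra.
    assert (x1 < x0) by (pose proof (Rmin_l x0 (M-1)); unfold x1 in *; lra).
    destruct (MVT_cor2 W (fun y => h y * exp (- G y)) x1 x0 H) as [c [Hc _]].
    { intros c _. apply D_to. apply HW. }
    assert (0 <= h c * exp (- G c)) by (apply Rmult_le_pos; [apply Hh | apply Rlt_le, exp_pos]).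
    assert (0 <= h c * exp (- G c) * (x0 - x1)) by (apply Rmult_le_pos; lra). lra. }
  assert (0 < W x0) by lra.
  unfold W in H. assert (0 < exp (- G x0)) by apply exp_pos.
  destruct (Rle_or_lt (f x0) 0) as [Hle|Hlt]; auto.
  assert (f x0 * exp (- G x0) <= 0). { apply Rmult_le_0_r; lra. } lra.
Qed.

Lemma lim_minfty_pos u l : lim_minfty u l -> 0 < l -> exists M, forall x, x < M -> 0 < u x.
Proof. intros H Hl. destruct (H l Hl) as [M HM]. exists M. intros x Hx. specialize (HM x Hx).
  apply Rabs_def2 in HM. lra. Qed.

Lemma exp_mul_pos y z : 0 < exp y * z -> 0 < z.
Proof. intros H. pose proof (exp_pos y). destruct (Rle_or_lt z 0); auto.
  assert (exp y * z <= 0) by (apply Rmult_le_0_l; lra). lra. Qed.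

Lemma FLl_id' x : FL (locally x) (fun y => y) x. Proof. apply filterlim_id. Qed.
Ltac flstep' := first [ assumption | apply FLl_id' | apply FL_const | apply FL_plus | apply FL_minus | apply FL_mult | apply FL_opp | apply FL_inv ].
Ltac fl' := unfold Rdiv; repeat flstep'.

Lemma orbit_pos al m n lam p q r s kappa :
  0 < al -> 0 < lam -> 0 < n -> 0 < bb al m n lam -> 0 < r0 al m n lam -> 0 < s0 al m n lam -> 0 < kappa ->
  heteroclinic_M0_M1 al m n lam p q r s -> leaves_M0_along_X01 al m n lam kappa p q r s ->
  forall x, 0 < p x /\ 0 < q x /\ 0 < r x /\ 0 < s x.
Proof.
  intros Hal Hl Hn Hb Hr0 Hs0 Hk [HS [Hp1 [Hq1 [Hr1 [Hs1 _]]]]] [Lp [Lq _]].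
  assert (Cp : forall x, FL (locally x) p (p x)).
  { intros x. apply (D_cont p x (Fp al m n lam (p x) (q x) (r x) (s x))). apply D_of. apply HS. }
  assert (Cq : forall x, FL (locally x) q (q x)).
  { intros x. apply (D_cont q x (Fq al m n lam (p x) (q x) (r x) (s x))). apply D_of. apply HS. }
  assert (Cr : forall x, FL (locally x) r (r x)).
  { intros x. apply (D_cont r x (Fr_rhs al m n lam (p x) (q x) (r x) (s x) / n)). apply D_of. apply HS. }
  assert (Cs : forall x, FL (locally x) s (s x)).
  { intros x. apply (D_cont s x (Fs al m n lam (p x) (q x) (r x) (s x))). apply D_of. apply HS. }
  assert (Pp : forall x, 0 < p x).
  { apply (pos_ode p (fun x => 1/lam * (r x - aa al m n lam) + 2 - lam * p x * r x - q x) (fun _ => 0)).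
    - intros x. eapply D_eq. apply D_of. apply HS. unfold Fp. ring.
    - intros x. specialize (Cp x); specialize (Cq x); specialize (Cr x). unfold continuous. fl'.
    - intros; lra.
    - destruct (lim_minfty_pos _ _ Lp ltac:(lra)) as [M HM]. exists M. intros x Hx.
      apply (exp_mul_pos (-2*x)). specialize (HM x Hx). simpl in HM. lra. }
  assert (Pr : forall x, 0 < r x).
  { apply (pos_ode r (fun x => ((al-m-n)/(lam*(1+al)) * (r x - aa al m n lam) + lam*p x*r x + q x
       + al/lam * r x * (s x - (1+m+n)/(1+al)) + n*al/(lam*(1+al))) / n) (fun _ => 0)).
    - intros x. eapply D_eq. apply D_of. apply HS. unfold Fr_rhs. field. repeat split; lra.
    - intros x. specialize (Cp x); specialize (Cq x); specialize (Cr x); specialize (Cs x). unfold continuous.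
      assert (lam * (1+al) <> 0) by (apply Rmult_integral_contrapositive; split; lra).
      assert (n <> 0) by lra. assert (lam <> 0) by lra. assert (1+al <> 0) by lra. fl'.
    - intros; lra.
    - destruct (lim_minfty_pos _ _ Hr1 Hr0) as [M HM]. exists M. auto. }
  assert (Ps : forall x, 0 < s x).
  { apply (pos_ode s (fun x => (al-m-n)/(lam*(1+al)) * (r x - aa al m n lam) + lam*p x*r x + q x
       - 1/lam * r x * (s x - (1+m+n)/(1+al)) - n/(lam*(1+al))) (fun _ => 0)).
    - intros x. eapply D_eq. apply D_of. apply HS. unfold Fs. ring.
    - intros x. specialize (Cp x); specialize (Cq x); specialize (Cr x); specialize (Cs x). unfold continuous.
      assert (lam * (1+al) <> 0) by (apply Rmult_integral_contrapositive; split; lra).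
      assert (n <> 0) by lra. assert (lam <> 0) by lra. assert (1+al <> 0) by lra. fl'.
    - intros; lra.
    - destruct (lim_minfty_pos _ _ Hs1 Hs0) as [M HM]. exists M. auto. }
  assert (Pq : forall x, 0 < q x).
  { apply (pos_ode q (fun x => 1 - lam * p x * r x - q x) (fun x => bb al m n lam * p x * r x)).
    - intros x. eapply D_eq. apply D_of. apply HS. unfold Fq. ring.
    - intros x. specialize (Cp x); specialize (Cq x); specialize (Cr x). unfold continuous. fl'.
    - intros x. apply Rlt_le. specialize (Pp x). specialize (Pr x). apply Rmult_lt_0_compat; [apply Rmult_lt_0_compat|]; lra.
    - destruct (lim_minfty_pos _ _ Lq) as [M HM]. apply Rmult_lt_0_compat; auto. apply Rmult_lt_0_compat; auto.
      exists M. intros x Hx.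
      replace (q x) with (q x - 0) by ring. apply (exp_mul_pos (-2*x)). exact (HM x Hx). }
  intros x; repeat split; auto.
Qed.

Definition Ev (c0 cp cq cr cs : R) (p q r s : R -> R) (eta0 xi : R) : R :=
  exp (c0 * ln xi + cp * ln (at_log p eta0 xi) + cq * ln (at_log q eta0 xi)
       + cr * ln (at_log r eta0 xi) + cs * ln (at_log s eta0 xi)).

Definition Lc al m n lam (c0 cp cq cr cs p q r s : R) : R :=
  c0 + cp * (Fp al m n lam p q r s / p) + cq * (Fq al m n lam p q r s / q)
     + cr * ((Fr_rhs al m n lam p q r s / n) / r) + cs * (Fs al m n lam p q r s / s).

Definition POS (p q r s : R -> R) := forall x, 0 < p x /\ 0 < q x /\ 0 < r x /\ 0 < s x.

Lemma Ev_mul c0 cp cq cr cs d0 dp dq dr ds p q r s eta0 xi :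
  Ev c0 cp cq cr cs p q r s eta0 xi * Ev d0 dp dq dr ds p q r s eta0 xi =
  Ev (c0+d0) (cp+dp) (cq+dq) (cr+dr) (cs+ds) p q r s eta0 xi.
Proof. unfold Ev. rewrite <- exp_plus. f_equal. ring. Qed.
Lemma Ev_inv c0 cp cq cr cs p q r s eta0 xi :
  / Ev c0 cp cq cr cs p q r s eta0 xi = Ev (-c0) (-cp) (-cq) (-cr) (-cs) p q r s eta0 xi.
Proof. unfold Ev. rewrite <- exp_Ropp. f_equal. ring. Qed.
Lemma Ev_ext c0 cp cq cr cs d0 dp dq dr ds p q r s eta0 xi :
  c0 = d0 -> cp = dp -> cq = dq -> cr = dr -> cs = ds ->
  Ev c0 cp cq cr cs p q r s eta0 xi = Ev d0 dp dq dr ds p q r s eta0 xi.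
Proof. intros; subst; auto. Qed.
Lemma Ev_xi p q r s eta0 xi : 0 < xi -> xi = Ev 1 0 0 0 0 p q r s eta0 xi.
Proof. intros. unfold Ev. replace (1 * ln xi + 0 * ln (at_log p eta0 xi) + 0 * ln (at_log q eta0 xi) + 0 * ln (at_log r eta0 xi) + 0 * ln (at_log s eta0 xi)) with (ln xi) by ring. rewrite exp_ln; auto. Qed.
Lemma Ev_P p q r s eta0 xi : POS p q r s -> at_log p eta0 xi = Ev 0 1 0 0 0 p q r s eta0 xi.
Proof. intros H. unfold Ev. replace (0 * ln xi + 1 * ln (at_log p eta0 xi) + 0 * ln (at_log q eta0 xi) + 0 * ln (at_log r eta0 xi) + 0 * ln (at_log s eta0 xi)) with (ln (at_log p eta0 xi)) by ring. rewrite exp_ln; auto. apply H. Qed.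
Lemma Ev_Q p q r s eta0 xi : POS p q r s -> at_log q eta0 xi = Ev 0 0 1 0 0 p q r s eta0 xi.
Proof. intros H. unfold Ev. replace (0 * ln xi + 0 * ln (at_log p eta0 xi) + 1 * ln (at_log q eta0 xi) + 0 * ln (at_log r eta0 xi) + 0 * ln (at_log s eta0 xi)) with (ln (at_log q eta0 xi)) by ring. rewrite exp_ln; auto. apply H. Qed.
Lemma Ev_R p q r s eta0 xi : POS p q r s -> at_log r eta0 xi = Ev 0 0 0 1 0 p q r s eta0 xi.
Proof. intros H. unfold Ev. replace (0 * ln xi + 0 * ln (at_log p eta0 xi) + 0 * ln (at_log q eta0 xi) + 1 * ln (at_log r eta0 xi) + 0 * ln (at_log s eta0 xi)) with (ln (at_log r eta0 xi)) by ring. rewrite exp_ln; auto. apply H. Qed.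
Lemma Ev_S p q r s eta0 xi : POS p q r s -> at_log s eta0 xi = Ev 0 0 0 0 1 p q r s eta0 xi.
Proof. intros H. unfold Ev. replace (0 * ln xi + 0 * ln (at_log p eta0 xi) + 0 * ln (at_log q eta0 xi) + 0 * ln (at_log r eta0 xi) + 1 * ln (at_log s eta0 xi)) with (ln (at_log s eta0 xi)) by ring. rewrite exp_ln; auto. apply H. Qed.
Lemma Ev_pos c0 cp cq cr cs p q r s eta0 xi : 0 < Ev c0 cp cq cr cs p q r s eta0 xi.
Proof. apply exp_pos. Qed.

Lemma D_atlog f df eta0 xi : 0 < xi -> is_derive f (ln xi - eta0) df ->
  is_derive (at_log f eta0) xi (df / xi).
Proof. intros Hx H. unfold at_log. eapply D_eq. apply (D_comp (fun x => ln x - eta0) f xi (/xi) df).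
  eapply D_eq. apply D_minus. apply is_derive_ln; auto. apply D_const. ring. auto. field. lra. Qed.

Lemma deriv_Ev al m n lam p q r s eta0 c0 cp cq cr cs xi :
  0 < n -> solves_S al m n lam p q r s -> POS p q r s -> 0 < xi ->
  is_derive (Ev c0 cp cq cr cs p q r s eta0) xi
    (Ev c0 cp cq cr cs p q r s eta0 xi *
      (Lc al m n lam c0 cp cq cr cs (at_log p eta0 xi) (at_log q eta0 xi) (at_log r eta0 xi) (at_log s eta0 xi) / xi)).
Proof.
  intros Hn HS HP Hx. set (eta := ln xi - eta0).
  destruct (HS eta) as (Hp & Hq & Hr & Hs). destruct (HP eta) as (Pp & Pq & Pr & Ps).
  apply D_of in Hp, Hq, Hr, Hs.
  pose proof (D_atlog p _ eta0 xi Hx Hp) as Dp.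
  pose proof (D_atlog q _ eta0 xi Hx Hq) as Dq.
  pose proof (D_atlog r _ eta0 xi Hx Hr) as Dr.
  pose proof (D_atlog s _ eta0 xi Hx Hs) as Ds.
  unfold Ev. eapply D_eq. apply D_exp.
  apply D_plus. apply D_plus. apply D_plus. apply D_plus.
  apply D_scal. apply is_derive_ln; auto.
  apply D_scal. apply D_ln. exact Dp. exact Pp.
  apply D_scal. apply D_ln. exact Dq. exact Pq.
  apply D_scal. apply D_ln. exact Dr. exact Pr.
  apply D_scal. apply D_ln. exact Ds. exact Ps.
  unfold Lc, at_log. fold eta. field. repeat split; lra.
Qed.

Lemma GammaF_Ev al m n p q r s eta0 xi :
  GammaF al m n p r s eta0 xi = Ev (-a1 al m n) ((1+al)/Dd al m n) 0 (n/Dd al m n) (al/Dd al m n) p q r s eta0 xi.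
Proof. unfold GammaF, Ev, Rpower. rewrite <- !exp_plus. f_equal. ring. Qed.
Lemma UF_Ev al m n p q r s eta0 xi :
  UF al m n p r s eta0 xi = Ev (-a1 al m n) ((1+al)/Dd al m n) 0 (1 + n/Dd al m n) (al/Dd al m n) p q r s eta0 xi.
Proof. unfold UF, Ev, Rpower. rewrite <- !exp_plus. f_equal. ring. Qed.
Lemma ThetaF_Ev al m n p q r s eta0 xi :
  ThetaF al m n p r s eta0 xi = Ev (- Defs.c1 al m n) ((1+m+n)/Dd al m n) 0 (2*n/Dd al m n) (-(1-m-n)/Dd al m n) p q r s eta0 xi.
Proof. unfold ThetaF, Ev, Rpower. rewrite <- !exp_plus. f_equal. ring. Qed.
Lemma SigmaF_Ev al m n p q r s eta0 xi :
  SigmaF al m n p r s eta0 xi = Ev (- Defs.d1 al m n) (-(al-m-n)/Dd al m n) 0 (n/Dd al m n) (al/Dd al m n) p q r s eta0 xi.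
Proof. unfold SigmaF, Ev, Rpower. rewrite <- !exp_plus. f_equal. ring. Qed.
Lemma VF_Ev al m n lam p q r s eta0 xi : POS p q r s ->
  VF al m n lam p q r s eta0 xi = / bb al m n lam * Ev (- b1 al m n) (-(al-m-n)/Dd al m n) 1 (n/Dd al m n) (al/Dd al m n) p q r s eta0 xi.
Proof. intros HP. unfold VF. rewrite (Ev_Q p q r s eta0 xi HP). unfold Ev, Rpower.
  rewrite !Rmult_assoc. f_equal. rewrite <- !exp_plus. f_equal. ring. Qed.

Lemma Ev_mulP c0 cp cq cr cs p q r s eta0 xi : POS p q r s ->
  Ev c0 cp cq cr cs p q r s eta0 xi * at_log p eta0 xi = Ev c0 (cp+1) cq cr cs p q r s eta0 xi.
Proof. intros H. rewrite (Ev_P p q r s eta0 xi H). rewrite Ev_mul. apply Ev_ext; ring. Qed.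
Lemma Ev_mulQ c0 cp cq cr cs p q r s eta0 xi : POS p q r s ->
  Ev c0 cp cq cr cs p q r s eta0 xi * at_log q eta0 xi = Ev c0 cp (cq+1) cr cs p q r s eta0 xi.
Proof. intros H. rewrite (Ev_Q p q r s eta0 xi H). rewrite Ev_mul. apply Ev_ext; ring. Qed.
Lemma Ev_mulR c0 cp cq cr cs p q r s eta0 xi : POS p q r s ->
  Ev c0 cp cq cr cs p q r s eta0 xi * at_log r eta0 xi = Ev c0 cp cq (cr+1) cs p q r s eta0 xi.
Proof. intros H. rewrite (Ev_R p q r s eta0 xi H). rewrite Ev_mul. apply Ev_ext; ring. Qed.
Lemma Ev_mulS c0 cp cq cr cs p q r s eta0 xi : POS p q r s ->
  Ev c0 cp cq cr cs p q r s eta0 xi * at_log s eta0 xi = Ev c0 cp cq cr (cs+1) p q r s eta0 xi.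
Proof. intros H. rewrite (Ev_S p q r s eta0 xi H). rewrite Ev_mul. apply Ev_ext; ring. Qed.
Lemma Ev_divQ c0 cp cq cr cs p q r s eta0 xi : POS p q r s ->
  Ev c0 cp cq cr cs p q r s eta0 xi * / at_log q eta0 xi = Ev c0 cp (cq-1) cr cs p q r s eta0 xi.
Proof. intros H. rewrite (Ev_Q p q r s eta0 xi H). rewrite Ev_inv, Ev_mul. apply Ev_ext; ring. Qed.
Lemma Ev_mulxi c0 cp cq cr cs p q r s eta0 xi : 0 < xi ->
  Ev c0 cp cq cr cs p q r s eta0 xi * xi = Ev (c0+1) cp cq cr cs p q r s eta0 xi.
Proof. intros H. transitivity (Ev c0 cp cq cr cs p q r s eta0 xi * Ev 1 0 0 0 0 p q r s eta0 xi). f_equal. apply Ev_xi; auto. rewrite Ev_mul. apply Ev_ext; ring. Qed.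
Lemma Ev_divxi c0 cp cq cr cs p q r s eta0 xi : 0 < xi ->
  Ev c0 cp cq cr cs p q r s eta0 xi * / xi = Ev (c0-1) cp cq cr cs p q r s eta0 xi.
Proof. intros H. transitivity (Ev c0 cp cq cr cs p q r s eta0 xi * / Ev 1 0 0 0 0 p q r s eta0 xi). f_equal. f_equal. apply Ev_xi; auto. rewrite Ev_inv, Ev_mul. apply Ev_ext; ring. Qed.

Definition dGF al m n lam (p q r s : R -> R) eta0 xi := GammaF al m n p r s eta0 xi * (at_log r eta0 xi - aa al m n lam) / (lam * xi).
Definition dTF al m n lam (p q r s : R -> R) eta0 xi := ThetaF al m n p r s eta0 xi * (at_log r eta0 xi * at_log s eta0 xi - cc al m n lam) / (lam * xi).
Definition dSF al m n lam p q r s eta0 xi := bb al m n lam * VF al m n lam p q r s eta0 xi + lam * xi * UF al m n p r s eta0 xi.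
Definition dUF al m n lam p q r s eta0 xi := dGF al m n lam p q r s eta0 xi * at_log r eta0 xi +
   GammaF al m n p r s eta0 xi * ((Fr_rhs al m n lam (at_log p eta0 xi) (at_log q eta0 xi) (at_log r eta0 xi) (at_log s eta0 xi) / n) / xi).

Definition PH al m n lam := 0 < n /\ 0 < lam /\ Dd al m n <> 0 /\ 1 + al <> 0 /\ bb al m n lam <> 0.

Lemma Rpower_Ev c0 cp cq cr cs p q r s eta0 xi y :
  Rpower (Ev c0 cp cq cr cs p q r s eta0 xi) y = Ev (y*c0) (y*cp) (y*cq) (y*cr) (y*cs) p q r s eta0 xi.
Proof. unfold Rpower. unfold Ev at 1. rewrite ln_exp. unfold Ev. f_equal. ring. Qed.

Lemma U_eq al m n (p q r s : R -> R) eta0 xi : POS p q r s ->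
  UF al m n p r s eta0 xi = GammaF al m n p r s eta0 xi * at_log r eta0 xi.
Proof. intros HP. rewrite (UF_Ev _ _ _ _ q), (GammaF_Ev _ _ _ _ q), (Ev_R p q r s eta0 xi HP), Ev_mul.
  apply Ev_ext; ring. Qed.

Lemma SU_eq al m n p q r s eta0 xi : POS p q r s -> Dd al m n <> 0 ->
  SigmaF al m n p r s eta0 xi * UF al m n p r s eta0 xi = ThetaF al m n p r s eta0 xi * (at_log r eta0 xi * at_log s eta0 xi).
Proof. intros HP HD. rewrite (UF_Ev _ _ _ _ q), (SigmaF_Ev _ _ _ _ q), (ThetaF_Ev _ _ _ _ q),
  (Ev_R p q r s eta0 xi HP), (Ev_S p q r s eta0 xi HP), !Ev_mul.
  unfold Defs.c1, Defs.d1, a1. unfold Dd in *. apply Ev_ext; field; auto. Qed.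

Lemma Sig_rel al m n (p q r s : R -> R) eta0 xi : Dd al m n <> 0 ->
  SigmaF al m n p r s eta0 xi = Rpower (ThetaF al m n p r s eta0 xi) (-al) * Rpower (GammaF al m n p r s eta0 xi) m * Rpower (UF al m n p r s eta0 xi) n.
Proof. intros HD. rewrite (UF_Ev _ _ _ _ q), (SigmaF_Ev _ _ _ _ q), (ThetaF_Ev _ _ _ _ q), (GammaF_Ev _ _ _ _ q),
  !Rpower_Ev, !Ev_mul. unfold Defs.c1, Defs.d1, a1. unfold Dd in *. apply Ev_ext; field; auto. Qed.

Lemma dG_ok al m n lam p q r s eta0 xi : PH al m n lam -> solves_S al m n lam p q r s -> POS p q r s -> 0 < xi ->
  is_derive (GammaF al m n p r s eta0) xi (dGF al m n lam p q r s eta0 xi).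
Proof. intros (Hn & Hl & HD & Ha & Hb) HS HP Hx.
  eapply D_ext. intros y. symmetry. apply (GammaF_Ev _ _ _ _ q).
  eapply D_eq. apply (deriv_Ev al m n lam); auto.
  destruct (HP (ln xi - eta0)) as (P1 & P2 & P3 & P4).
  unfold dGF. rewrite <- (GammaF_Ev _ _ _ _ q).
  unfold Lc, at_log, Fp, Fq, Fr_rhs, Fs, a1, aa. unfold Dd in *. field. repeat split; lra.
Qed.

Lemma dT_ok al m n lam p q r s eta0 xi : PH al m n lam -> solves_S al m n lam p q r s -> POS p q r s -> 0 < xi ->
  is_derive (ThetaF al m n p r s eta0) xi (dTF al m n lam p q r s eta0 xi).
Proof. intros (Hn & Hl & HD & Ha & Hb) HS HP Hx.
  eapply D_ext. intros y. symmetry. apply (ThetaF_Ev _ _ _ _ q).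
  eapply D_eq. apply (deriv_Ev al m n lam); auto.
  destruct (HP (ln xi - eta0)) as (P1 & P2 & P3 & P4).
  unfold dTF. rewrite <- (ThetaF_Ev _ _ _ _ q).
  unfold Lc, at_log, Fp, Fq, Fr_rhs, Fs, Defs.c1, aa, cc. unfold Dd in *. field. repeat split; lra.
Qed.

Lemma dV_ok al m n lam p q r s eta0 xi : PH al m n lam -> solves_S al m n lam p q r s -> POS p q r s -> 0 < xi ->
  is_derive (VF al m n lam p q r s eta0) xi (UF al m n p r s eta0 xi).
Proof. intros (Hn & Hl & HD & Ha & Hb) HS HP Hx.
  eapply D_ext. intros y. symmetry. apply (VF_Ev _ _ _ _ _ _ _ _ _ _ HP).
  eapply D_eq. apply D_scal. apply (deriv_Ev al m n lam); auto.
  destruct (HP (ln xi - eta0)) as (P1 & P2 & P3 & P4).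
  assert (E : Lc al m n lam (- b1 al m n) (- (al - m - n) / Dd al m n) 1 (n / Dd al m n) (al / Dd al m n)
    (at_log p eta0 xi) (at_log q eta0 xi) (at_log r eta0 xi) (at_log s eta0 xi) =
    bb al m n lam * at_log p eta0 xi * at_log r eta0 xi / at_log q eta0 xi).
  { unfold Lc, at_log, Fp, Fq, Fr_rhs, Fs, b1, aa, bb. unfold Dd in *. field. repeat split; lra. }
  rewrite E.
  transitivity (Ev (- b1 al m n) (- (al - m - n) / Dd al m n) 1 (n / Dd al m n) (al / Dd al m n) p q r s eta0 xi
     * at_log p eta0 xi * at_log r eta0 xi * / at_log q eta0 xi * / xi).
  { unfold at_log in *. field. repeat split; lra. }
  rewrite Ev_mulP, Ev_mulR, Ev_divQ, Ev_divxi, (UF_Ev _ _ _ _ q) by auto. unfold b1, a1. unfold Dd in *. apply Ev_ext; field; auto.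
Qed.

Lemma dS_ok al m n lam p q r s eta0 xi : PH al m n lam -> solves_S al m n lam p q r s -> POS p q r s -> 0 < xi ->
  is_derive (SigmaF al m n p r s eta0) xi (dSF al m n lam p q r s eta0 xi).
Proof. intros (Hn & Hl & HD & Ha & Hb) HS HP Hx.
  eapply D_ext. intros y. symmetry. apply (SigmaF_Ev _ _ _ _ q).
  eapply D_eq. apply (deriv_Ev al m n lam); auto.
  destruct (HP (ln xi - eta0)) as (P1 & P2 & P3 & P4).
  assert (E : Lc al m n lam (- Defs.d1 al m n) (- (al - m - n) / Dd al m n) 0 (n / Dd al m n) (al / Dd al m n)
    (at_log p eta0 xi) (at_log q eta0 xi) (at_log r eta0 xi) (at_log s eta0 xi) =
    at_log q eta0 xi + lam * at_log p eta0 xi * at_log r eta0 xi).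
  { unfold Lc, at_log, Fp, Fq, Fr_rhs, Fs, Defs.d1, aa, bb. unfold Dd in *. field. repeat split; lra. }
  rewrite E.
  set (ES := Ev (- Defs.d1 al m n) (- (al - m - n) / Dd al m n) 0 (n / Dd al m n) (al / Dd al m n) p q r s eta0 xi).
  transitivity (ES * at_log q eta0 xi * / xi + lam * xi * (ES * at_log p eta0 xi * at_log r eta0 xi * / xi * / xi)).
  { field. lra. }
  unfold ES. rewrite Ev_mulQ, Ev_mulP, Ev_mulR, !Ev_divxi by auto.
  unfold dSF. rewrite (VF_Ev _ _ _ _ _ _ _ _ _ _ HP), (UF_Ev _ _ _ _ q).
  rewrite <- Rmult_assoc, Rinv_r, Rmult_1_l by auto.
  unfold Defs.d1, b1, a1. unfold Dd in *.
  f_equal; [|f_equal]; apply Ev_ext; field; auto.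
Qed.

Lemma dU_ok al m n lam p q r s eta0 xi : PH al m n lam -> solves_S al m n lam p q r s -> POS p q r s -> 0 < xi ->
  is_derive (UF al m n p r s eta0) xi (dUF al m n lam p q r s eta0 xi).
Proof. intros HPH HS HP Hx.
  eapply D_ext. intros y. symmetry. apply (U_eq _ _ _ _ q _ _ _ _ HP).
  apply D_mult. apply dG_ok; auto.
  apply D_atlog; auto. apply D_of. apply HS.
Qed.

Lemma at_right_pos : at_right 0 (fun x => 0 < x).
Proof. exists (mkposreal 1 Rlt_0_1). intros y _ Hy. exact Hy. Qed.

Lemma ln_A (f : R -> R) x : 0 < f x -> ln (f x) = ln (exp (-2*x) * (f x - 0)) + 2*x.
Proof. intros H. rewrite ln_mult by (try apply exp_pos; lra). rewrite ln_exp. rewrite Rminus_0_r. ring. Qed.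

Lemma FLm_ln (f : R -> R) l : FL (Rbar_locally m_infty) f l -> 0 < l -> FL (Rbar_locally m_infty) (fun x => ln (f x)) (ln l).
Proof. intros. apply FL_ln; auto. Qed.

Ltac flm := unfold Rdiv; repeat first [ assumption | apply FL_const | apply FL_plus | apply FL_minus | apply FL_mult | apply FL_opp | apply FL_inv | apply FL_exp | (apply FL_ln; [assumption|]) ].

Lemma LimEv p q r s eta0 c0 cp cq cr cs lp lq lr ls :
  POS p q r s ->
  FL (Rbar_locally m_infty) (fun x => exp (-2*x) * (p x - 0)) lp ->
  FL (Rbar_locally m_infty) (fun x => exp (-2*x) * (q x - 0)) lq ->
  FL (Rbar_locally m_infty) r lr -> FL (Rbar_locally m_infty) s ls ->
  0 < lp -> 0 < lq -> 0 < lr -> 0 < ls ->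
  c0 + 2*cp + 2*cq = 0 ->
  FL (at_right 0) (Ev c0 cp cq cr cs p q r s eta0)
     (exp (c0 * eta0 + cp * ln lp + cq * ln lq + cr * ln lr + cs * ln ls)).
Proof.
  intros HP Lp Lq Lr Ls Hp Hq Hr Hs Hc.
  set (H := fun x => exp (c0 * eta0 + cp * ln (exp (-2*x) * (p x - 0)) + cq * ln (exp (-2*x) * (q x - 0))
                  + cr * ln (r x) + cs * ln (s x))).
  assert (LH : FL (Rbar_locally m_infty) H (exp (c0 * eta0 + cp * ln lp + cq * ln lq + cr * ln lr + cs * ln ls))).
  { unfold H. apply FL_exp. repeat apply FL_plus; try apply FL_const;
     (apply FL_mult; [apply FL_const| apply FL_ln; auto]). }
  pose proof (FL_compose _ _ _ (ln_to_minfty eta0) LH) as L2.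
  eapply FL_ext; [|exact L2].
  eapply filter_imp; [|exact at_right_pos]. intros x Hx. simpl. unfold H, Ev, at_log.
  destruct (HP (ln x - eta0)) as (P1 & P2 & P3 & P4).
  rewrite (ln_A p (ln x - eta0)), (ln_A q (ln x - eta0)) by auto. f_equal.
  transitivity (c0 * eta0 + cp * ln (exp (-2 * (ln x - eta0)) * (p (ln x - eta0) - 0)) +
    cq * ln (exp (-2 * (ln x - eta0)) * (q (ln x - eta0) - 0)) + cr * ln (r (ln x - eta0)) +
    cs * ln (s (ln x - eta0)) + (c0 + 2*cp + 2*cq) * (ln x - eta0)).
  rewrite Hc. ring. ring.
Qed.

Lemma at_right_ex (P : R -> Prop) : at_right 0 P -> exists d, 0 < d /\ forall y, 0 < y < d -> P y.
Proof. intros [d Hd]. exists d. split. apply cond_pos. intros y Hy. apply Hd; [|lra].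
  unfold ball; simpl; unfold AbsRing_ball, abs, minus, plus, opp; simpl. change (Rabs (y - 0) < d). rewrite Rminus_0_r, Rabs_right; lra. Qed.

Lemma at_right_in (P : R -> Prop) d : 0 < d -> (forall y, 0 < y < d -> P y) -> at_right 0 P.
Proof. intros Hd H. exists (mkposreal d Hd). intros y Hy Hy0. apply H. split; auto.
  unfold ball in Hy; simpl in Hy; unfold AbsRing_ball, abs, minus, plus, opp in Hy; simpl in Hy.
  change (Rabs (y - 0) < d) in Hy. rewrite Rminus_0_r, Rabs_right in Hy; lra. Qed.

Lemma int_lemma (f f' : R -> R) (j : nat) :
  (forall x, 0 < x -> is_derive f x (f' x)) ->
  FL (at_right 0) f 0 ->
  FL (at_right 0) (fun x => f' x / x ^ j) 0 ->
  FL (at_right 0) (fun x => f x / x ^ (S j)) 0.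
Proof.
  intros Hd Hf Hf'. apply FL_intro. intros eps He.
  pose proof (FL_abs_lt _ _ (eps/2) Hf' ltac:(lra)) as H1.
  destruct (at_right_ex _ H1) as [d [Hd0 Hd1]].
  apply (at_right_in _ d Hd0). intros x Hx.
  assert (Hxj : 0 < x ^ S j) by (apply pow_lt; lra).
  assert (Hbound : Rabs (f x) <= eps/2 * x ^ S j).
  { destruct (Rle_or_lt (Rabs (f x)) (eps/2 * x ^ S j)) as [Hle|Hgt]; auto. exfalso.
    set (g := Rabs (f x) - eps/2 * x ^ S j).
    assert (Hg : 0 < g) by (unfold g; lra).
    pose proof (FL_abs_lt _ _ g Hf Hg) as H2.
    destruct (at_right_ex _ H2) as [d2 [Hd2 Hd3]].
    set (y := Rmin (x/2) (d2/2)).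
    assert (Hy0 : 0 < y) by (unfold y; apply Rmin_pos; lra).
    assert (Hyx : y < x) by (unfold y; pose proof (Rmin_l (x/2) (d2/2)); lra).
    assert (Hyd : y < d2) by (unfold y; pose proof (Rmin_r (x/2) (d2/2)); lra).
    specialize (Hd3 y ltac:(lra)). rewrite Rminus_0_r in Hd3.
    destruct (MVT_cor2 f f' y x Hyx) as [c [Hc1 Hc2]].
    { intros c Hc. apply D_to. apply Hd. lra. }
    specialize (Hd1 c ltac:(lra)). rewrite Rminus_0_r in Hd1.
    assert (Hcj : 0 < c ^ j) by (apply pow_lt; lra).
    assert (Hf'c : Rabs (f' c) < eps/2 * c ^ j).
    { unfold Rdiv in Hd1. rewrite Rabs_mult, Rabs_inv, (Rabs_right (c^j)) in Hd1 by lra.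
      apply (Rmult_lt_compat_r (c^j)) in Hd1; auto. rewrite Rmult_assoc, Rinv_l in Hd1 by lra. lra. }
    assert (Hcx : c ^ j <= x ^ j) by (apply pow_incr; lra).
    assert (Rabs (f x - f y) = Rabs (f' c) * (x - y)).
    { rewrite Hc1, Rabs_mult. rewrite (Rabs_right (x - y)) by lra. auto. }
    assert (Rabs (f x) <= Rabs (f x - f y) + Rabs (f y)).
    { replace (f x) with ((f x - f y) + f y) at 1 by ring. apply Rabs_triang. }
    assert (Rabs (f' c) * (x - y) <= eps/2 * x ^ j * x).
    { assert (eps/2 * c^j <= eps/2 * x^j) by (apply Rmult_le_compat_l; lra).
      apply Rmult_le_compat; try lra. apply Rabs_pos. }
    unfold g in Hd3. assert (E: eps/2 * x ^ S j = eps/2 * x ^ j * x) by (simpl; ring). rewrite E in Hd3. lra. }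
  rewrite Rminus_0_r. unfold Rdiv. rewrite Rabs_mult, Rabs_inv, (Rabs_right (x ^ S j)) by lra.
  apply (Rmult_lt_reg_r (x ^ S j)); auto. rewrite Rmult_assoc, Rinv_l by lra. assert (eps/2 * x^S j < eps * x^S j) by (apply Rmult_lt_compat_r; lra). lra.
Qed.

Lemma FL_eql {F : (R -> Prop) -> Prop} {FF : Filter F} (f : R -> R) l1 l2 : l1 = l2 -> FL F f l1 -> FL F f l2.
Proof. intros; subst; auto. Qed.

Lemma FLr_id : FL (at_right 0) (fun x => x) 0.
Proof. apply FL_intro. intros eps He. apply (at_right_in _ eps He). intros y Hy. rewrite Rminus_0_r, Rabs_right; lra. Qed.

Lemma expansion_from (X dX : R -> R) X0 X2 :
  (forall x, 0 < x -> is_derive X x (dX x)) -> FL (at_right 0) X X0 ->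
  FL (at_right 0) (fun x => dX x / x) X2 -> expansion0 X dX X0 X2.
Proof.
  intros Hd HX HdX.
  set (f := fun x => X x - X0 - X2 * x^2 / 2).
  set (f' := fun x => dX x - X2 * x).
  assert (Hf : forall x, 0 < x -> is_derive f x (f' x)).
  { intros x Hx. unfold f, f'. eapply D_eq. apply D_minus. apply D_minus. apply Hd; auto. apply D_const.
    apply (D_ext (fun y => X2 * (y*y) * / 2)). intros y. simpl. field.
    apply (D_mult (fun y => X2 * (y*y)) (fun _ => / 2)). apply D_scal. apply D_mult; apply D_id. apply D_const.
    simpl. field. }
  assert (Lf : FL (at_right 0) f 0).
  { unfold f. apply (FL_eql _ (X0 - X0 - X2 * 0^2/2)); [simpl; field|]. unfold Rdiv.
    simpl. repeat first [assumption | apply FL_minus | apply FL_mult | apply FL_const | apply FLr_id]. }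
  assert (Lf' : FL (at_right 0) (fun x => f' x / x ^ 1) 0).
  { apply (FL_ext (fun x => dX x / x - X2)). eapply filter_imp; [|apply (at_right_in _ 1 Rlt_0_1); intros y Hy; exact (proj1 Hy)].
    intros x Hx. unfold f'. simpl. field. lra.
    apply (FL_eql _ (X2 - X2)); [ring|]. apply FL_minus; auto. apply FL_const. }
  pose proof (int_lemma f f' 1 Hf Lf Lf') as L2.
  split; [|split; [|split]].
  - apply FL_rlim0; auto.
  - apply FL_rlim0. apply (FL_ext (fun x => x * (f x / x ^ 2) + X2 / 2 * x)).
    eapply filter_imp; [|apply (at_right_in _ 1 Rlt_0_1); intros y Hy; exact (proj1 Hy)].
    intros x Hx. unfold f. simpl. field. lra.
    apply (FL_eql _ (0 * 0 + X2/2 * 0)); [ring|]. apply FL_plus. apply FL_mult; auto. apply FLr_id.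
    apply FL_mult. apply FL_const. apply FLr_id.
  - apply FL_rlim0. apply (FL_ext (fun x => dX x / x)).
    apply filter_forall. intros x. unfold Rminus. rewrite Ropp_0, Rplus_0_r. auto. auto.
  - apply FL_rlim0. exact L2.
Qed.

Lemma expansion_V (V U : R -> R) U0 U2 :
  (forall x, 0 < x -> is_derive V x (U x)) -> FL (at_right 0) V 0 ->
  FL (at_right 0) (fun x => (U x - U0 - U2 * x^2/2) / x^2) 0 ->
  FL (at_right 0) (fun x => (V x - U0 * x - U2 * x^3 / 6) / x^3) 0.
Proof.
  intros Hd HV HU.
  set (f := fun x => V x - U0 * x - U2 * x^3 / 6).
  set (f' := fun x => U x - U0 - U2 * x^2 / 2).
  assert (Hf : forall x, 0 < x -> is_derive f x (f' x)).
  { intros x Hx. unfold f, f'. eapply D_eq. apply D_minus. apply D_minus. apply Hd; auto. apply D_scal. apply D_id.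
    apply (D_ext (fun y => U2 * (y * (y * y)) * / 6)). intros y. simpl. field.
    apply (D_mult (fun y => U2 * (y*(y*y))) (fun _ => / 6)). apply D_scal. apply D_mult. apply D_id. apply D_mult; apply D_id. apply D_const.
    simpl. field. }
  assert (Lf : FL (at_right 0) f 0).
  { unfold f. apply (FL_eql _ (0 - U0 * 0 - U2 * 0^3/6)); [simpl; field|]. unfold Rdiv.
    simpl. repeat first [assumption | apply FL_minus | apply FL_mult | apply FL_const | apply FLr_id]. }
  apply (int_lemma f f' 2 Hf Lf). exact HU.
Qed.

Lemma inv_xi2 xi eta0 : 0 < xi -> / (xi * xi) = exp (-2 * (ln xi - eta0)) * exp (-2 * eta0).
Proof. intros H. rewrite <- exp_plus. replace (-2 * (ln xi - eta0) + -2 * eta0) with (- (ln xi + ln xi)) by ring.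
  rewrite exp_Ropp, exp_plus, exp_ln by auto. reflexivity. Qed.

Definition SETUP al m n lam (p q r s : R -> R) kappa :=
  PH al m n lam /\ 0 < al /\ Good al m lam n /\ heteroclinic_M0_M1 al m n lam p q r s /\ 0 < kappa /\
  leaves_M0_along_X01 al m n lam kappa p q r s /\ POS p q r s.

Lemma FLm_facts al m n lam p q r s kappa : SETUP al m n lam p q r s kappa ->
  FL (Rbar_locally m_infty) (fun x => exp (-2*x) * (p x - 0)) (kappa * 1) /\
  FL (Rbar_locally m_infty) (fun x => exp (-2*x) * (q x - 0)) (kappa * (bb al m n lam * r0 al m n lam)) /\
  FL (Rbar_locally m_infty) (fun x => exp (-2*x) * (r x - r0 al m n lam)) (kappa * y1 al m n lam) /\
  FL (Rbar_locally m_infty) (fun x => exp (-2*x) * (s x - s0 al m n lam)) (kappa * z1 al m n lam) /\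
  FL (Rbar_locally m_infty) p 0 /\ FL (Rbar_locally m_infty) q 0 /\
  FL (Rbar_locally m_infty) r (r0 al m n lam) /\ FL (Rbar_locally m_infty) s (s0 al m n lam).
Proof. intros (_ & _ & _ & (_ & H1 & H2 & H3 & H4 & _) & _ & (L1 & L2 & L3 & L4) & _).
  repeat split; apply lim_minfty_FL; auto. Qed.

Definition eta0_of al m n lam kappa G0 :=
  ((1+al)/Dd al m n * ln kappa + n/Dd al m n * ln (r0 al m n lam) + al/Dd al m n * ln (s0 al m n lam) - ln G0) / a1 al m n.

Definition EvL al m n lam kappa eta0 (c0 cp cq cr cs : R) :=
  exp (c0 * eta0 + cp * ln (kappa * 1) + cq * ln (kappa * (bb al m n lam * r0 al m n lam)) + cr * ln (r0 al m n lam) + cs * ln (s0 al m n lam)).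

Lemma Ev_lim al m n lam p q r s kappa eta0 c0 cp cq cr cs : SETUP al m n lam p q r s kappa ->
  c0 + 2*cp + 2*cq = 0 ->
  FL (at_right 0) (Ev c0 cp cq cr cs p q r s eta0) (EvL al m n lam kappa eta0 c0 cp cq cr cs).
Proof. intros HS Hc. pose proof HS as (_ & _ & (g1 & g2 & g3 & g4 & g5 & _) & _ & Hk & _ & HP).
  destruct (FLm_facts _ _ _ _ _ _ _ _ _ HS) as (F1 & F2 & F3 & F4 & F5 & F6 & F7 & F8).
  apply LimEv; auto. lra. apply Rmult_lt_0_compat; auto. apply Rmult_lt_0_compat; auto.
Qed.

Lemma cc_eq al m n lam : aa al m n lam <> 0 -> Dd al m n <> 0 -> 1 + al <> 0 ->
  cc al m n lam = aa al m n lam * s0 al m n lam.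
Proof. intros. unfold s0, r0. unfold cc. unfold aa in *. unfold Dd in *.
  assert (N : 2 + 2*al - n + 2*(1+al)*lam <> 0).
  { intro E. apply H. replace ((2 + 2 * al - n) / (1 + 2 * al - m - n) + 2 * (1 + al) / (1 + 2 * al - m - n) * lam)
      with ((2 + 2*al - n + 2*(1+al)*lam) / (1 + 2*al - m - n)) by (field; auto). rewrite E. unfold Rdiv; ring. }
  field. repeat split; auto. Qed.

Lemma G0_val al m n lam kappa G0 : 0 < G0 -> Dd al m n <> 0 -> 1 + al <> 0 ->
  EvL al m n lam kappa (eta0_of al m n lam kappa G0) (-a1 al m n) ((1+al)/Dd al m n) 0 (n/Dd al m n) (al/Dd al m n) = G0.
Proof. intros HG HD Ha. unfold EvL. rewrite Rmult_1_r. rewrite <- (exp_ln G0) at 2 by auto. f_equal.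
  unfold eta0_of, a1. field. auto. Qed.

Lemma T0_val al m n lam kappa G0 : 0 < G0 -> Dd al m n <> 0 -> 1 + al <> 0 -> 0 < aa al m n lam -> 0 < s0 al m n lam ->
  EvL al m n lam kappa (eta0_of al m n lam kappa G0) (- Defs.c1 al m n) ((1+m+n)/Dd al m n) 0 (2*n/Dd al m n) (-(1-m-n)/Dd al m n)
  = Rpower (cc al m n lam) (-(1/(1+al))) * Rpower G0 (m/(1+al)) * Rpower (aa al m n lam * G0) ((1+n)/(1+al)).
Proof. intros HG HD Ha Haa Hs. rewrite cc_eq by lra. unfold EvL, Rpower. rewrite Rmult_1_r, <- !exp_plus. f_equal.
  rewrite Rmult_0_l. rewrite !ln_mult by auto. unfold eta0_of, a1, Defs.c1, r0. unfold Dd in *. field. auto. Qed.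

Lemma S0_val al m n lam kappa G0 : 0 < G0 -> Dd al m n <> 0 -> 1 + al <> 0 -> 0 < aa al m n lam -> 0 < s0 al m n lam ->
  EvL al m n lam kappa (eta0_of al m n lam kappa G0) (- Defs.d1 al m n) (-(al-m-n)/Dd al m n) 0 (n/Dd al m n) (al/Dd al m n)
  = Rpower (cc al m n lam) (al/(1+al)) * Rpower G0 (m/(1+al)) * Rpower (aa al m n lam * G0) (-((al-n)/(1+al))).
Proof. intros HG HD Ha Haa Hs. rewrite cc_eq by lra. unfold EvL, Rpower. rewrite Rmult_1_r, <- !exp_plus. f_equal.
  rewrite Rmult_0_l. rewrite !ln_mult by auto. unfold eta0_of, a1, Defs.d1, r0. unfold Dd in *. field. auto. Qed.

Lemma V0_val al m n lam kappa G0 : 0 < G0 -> Dd al m n <> 0 -> 1 + al <> 0 -> 0 < aa al m n lam -> 0 < bb al m n lam -> 0 < kappa ->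
  / bb al m n lam * EvL al m n lam kappa (eta0_of al m n lam kappa G0) (- b1 al m n - 1) (-(al-m-n)/Dd al m n) 1 (n/Dd al m n) (al/Dd al m n)
  = aa al m n lam * G0.
Proof. intros HG HD Ha Haa Hb Hk.
  transitivity (exp (- ln (bb al m n lam)) * EvL al m n lam kappa (eta0_of al m n lam kappa G0) (- b1 al m n - 1) (-(al-m-n)/Dd al m n) 1 (n/Dd al m n) (al/Dd al m n)).
  { f_equal. rewrite exp_Ropp, exp_ln; auto. }
  replace (aa al m n lam * G0) with (exp (ln (aa al m n lam) + ln G0)) by (rewrite exp_plus, !exp_ln; auto).
  unfold EvL. rewrite Rmult_1_r, <- exp_plus. f_equal.
  rewrite !ln_mult by (try apply Rmult_lt_0_compat; auto). unfold eta0_of, a1, b1, r0. unfold Dd in *. field. auto. Qed.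

Lemma FL_eq_at {F : (R -> Prop) -> Prop} {FF : Filter F} (f g : R -> R) l1 l2 :
  F (fun x => f x = g x) -> l1 = l2 -> FL F f l1 -> FL F g l2.
Proof. intros H E H1. subst. eapply FL_ext; eauto. Qed.

Lemma FLc (K : R -> R) eta0 l : FL (Rbar_locally m_infty) K l -> FL (at_right 0) (fun xi => K (ln xi - eta0)) l.
Proof. intros H. apply (FL_compose (fun xi => ln xi - eta0) K l (ln_to_minfty eta0) H). Qed.

Ltac frs := unfold Rdiv; repeat first [ assumption | apply FL_const | apply FL_plus | apply FL_minus | apply FL_mult | apply FL_opp | apply FL_inv ].



Lemma near0_basic al m n lam p q r s kappa G0 : SETUP al m n lam p q r s kappa -> 0 < G0 ->
  let e0 := eta0_of al m n lam kappa G0 in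
  FL (at_right 0) (GammaF al m n p r s e0) G0 /\
  FL (at_right 0) (UF al m n p r s e0) (aa al m n lam * G0) /\
  FL (at_right 0) (ThetaF al m n p r s e0)
     (Rpower (cc al m n lam) (-(1/(1+al))) * Rpower G0 (m/(1+al)) * Rpower (aa al m n lam * G0) ((1+n)/(1+al))) /\
  FL (at_right 0) (SigmaF al m n p r s e0)
     (Rpower (cc al m n lam) (al/(1+al)) * Rpower G0 (m/(1+al)) * Rpower (aa al m n lam * G0) (-((al-n)/(1+al)))) /\
  FL (at_right 0) (fun xi => VF al m n lam p q r s e0 xi / xi) (aa al m n lam * G0) /\
  FL (at_right 0) (VF al m n lam p q r s e0) 0.
Proof.
  intros HS HG0 e0. pose proof HS as ((Hn & Hl & HD & Ha & Hb) & Hal & (g1 & g2 & g3 & g4 & g5 & g6 & g7 & g8 & g9) & _ & Hk & _ & HP).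
  destruct (FLm_facts _ _ _ _ _ _ _ _ _ HS) as (F1 & F2 & F3 & F4 & F5 & F6 & F7 & F8).
  assert (LG : FL (at_right 0) (GammaF al m n p r s e0) G0).
  { eapply (FL_ext_eq (Ev (-a1 al m n) ((1+al)/Dd al m n) 0 (n/Dd al m n) (al/Dd al m n) p q r s e0)).
    intros x; symmetry; apply (GammaF_Ev _ _ _ _ q). apply (G0_val al m n lam kappa G0); auto.
    apply (Ev_lim al m n lam p q r s kappa e0); auto. unfold a1. field. auto. }
  assert (LR : FL (at_right 0) (at_log r e0) (r0 al m n lam)) by (unfold at_log; apply FLc; auto).
  split; [exact LG|]. split.
  { apply (FL_ext_eq (fun xi => GammaF al m n p r s e0 xi * at_log r e0 xi) _ (G0 * r0 al m n lam)).
    intros x; symmetry; apply (U_eq _ _ _ _ q); auto. unfold r0; ring. apply FL_mult; auto. }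
  split.
  { eapply (FL_ext_eq (Ev (- Defs.c1 al m n) ((1+m+n)/Dd al m n) 0 (2*n/Dd al m n) (-(1-m-n)/Dd al m n) p q r s e0)).
    intros x; symmetry; apply (ThetaF_Ev _ _ _ _ q). apply (T0_val al m n lam kappa G0); auto.
    apply (Ev_lim al m n lam p q r s kappa e0); auto. unfold Defs.c1. field. auto. }
  split.
  { eapply (FL_ext_eq (Ev (- Defs.d1 al m n) (-(al-m-n)/Dd al m n) 0 (n/Dd al m n) (al/Dd al m n) p q r s e0)).
    intros x; symmetry; apply (SigmaF_Ev _ _ _ _ q). apply (S0_val al m n lam kappa G0); auto.
    apply (Ev_lim al m n lam p q r s kappa e0); auto. unfold Defs.d1. field. auto. }
  assert (LV : FL (at_right 0) (fun xi => VF al m n lam p q r s e0 xi / xi) (aa al m n lam * G0)).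
  { eapply (FL_eq_at (fun xi => / bb al m n lam * Ev (- b1 al m n - 1) (-(al-m-n)/Dd al m n) 1 (n/Dd al m n) (al/Dd al m n) p q r s e0 xi)).
    eapply filter_imp; [|exact at_right_pos]. intros x Hx. simpl.
    rewrite (VF_Ev _ _ _ _ _ _ _ _ _ _ HP). unfold Rdiv. rewrite Rmult_assoc, Ev_divxi by auto. unfold Rminus. reflexivity.
    apply (V0_val al m n lam kappa G0); auto. apply FL_mult. apply FL_const. apply (Ev_lim al m n lam p q r s kappa e0); auto. unfold b1. unfold Dd in *. field. auto. }
  split; [exact LV|].
  apply (FL_eq_at (fun xi => VF al m n lam p q r s e0 xi / xi * xi) _ (aa al m n lam * G0 * 0)).
  eapply filter_imp; [|exact at_right_pos]. intros x Hx. simpl. field. lra.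
  apply (Rmult_0_r (aa al m n lam * G0)). apply FL_mult; auto. apply FLr_id.
Qed.

Lemma eig al m n lam : lam <> 0 -> n <> 0 -> Dd al m n <> 0 -> 1+al <> 0 -> r0 al m n lam <> 0 -> s0 al m n lam <> 0 -> Delta1 al m n lam <> 0 ->
  r0 al m n lam * (y1 al m n lam * ((al-m-n)/(lam*(1+al)) + al/lam*(s0 al m n lam - (1+m+n)/(1+al)))
   + lam * r0 al m n lam + bb al m n lam * r0 al m n lam + al/lam * r0 al m n lam * z1 al m n lam) / n = 2 * y1 al m n lam.
Proof. intros Hl Hn HD Ha Hr Hs HDe.
  unfold y1, z1. unfold Delta1 in *. unfold s0 in *. set (RR := r0 al m n lam) in *. set (B := bb al m n lam).
  assert (N : (1 + m + n) * RR - n <> 0).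
  { intro E. apply Hs. replace ((1 + m + n) / (1 + al) - n / ((1 + al) * RR)) with (((1 + m + n) * RR - n) / ((1+al)*RR)) by (field; auto).
    rewrite E. unfold Rdiv; ring. }
  assert (X : (RR * (1 + al) - ((1 + m + n) * RR - n)) *
 ((1 + al) * RR * ((1 + m + n) * RR - n) + 2 * (RR * (1 + al)) * lam) -
 n * (1 + 2 * lam) *
 (RR * ((1 + m + n) * RR - n) + 2 * (RR * (1 + al)) * lam) * 
 (1 + al) <> 0).
  { intro E. apply HDe.
    replace ((1 - ((1 + m + n) / (1 + al) - n / ((1 + al) * RR))) / lam *
    ((1 + al) / lam * RR + 2 / ((1 + m + n) / (1 + al) - n / ((1 + al) * RR))) -
    n / RR * (1 / lam + 2) *
    (RR / lam + 2 / ((1 + m + n) / (1 + al) - n / ((1 + al) * RR)))) with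
    (((RR * (1 + al) - ((1 + m + n) * RR - n)) *
 ((1 + al) * RR * ((1 + m + n) * RR - n) + 2 * (RR * (1 + al)) * lam) -
 n * (1 + 2 * lam) *
 (RR * ((1 + m + n) * RR - n) + 2 * (RR * (1 + al)) * lam) * 
 (1 + al)) / ((1+al)*RR*lam*lam*((1 + m + n) * RR - n))) by (field; repeat split; auto).
    rewrite E. unfold Rdiv; ring. }
  field. repeat split; auto.
Qed.

Lemma Frdec al m n lam p q r s : r0 al m n lam <> 0 -> lam <> 0 -> 1+al<>0 ->
  Fr_rhs al m n lam p q r s = r * ((r - r0 al m n lam) * ((al-m-n)/(lam*(1+al)) + al/lam*(s - (1+m+n)/(1+al)))
    + lam*p*r + q + al/lam * r0 al m n lam * (s - s0 al m n lam)).
Proof. intros. unfold Fr_rhs, s0. unfold r0 in *. field. repeat split; auto. Qed.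

Definition K1 al m n lam := (al-m-n)/(lam*(1+al)).

Lemma near0_derivs al m n lam p q r s kappa G0 : SETUP al m n lam p q r s kappa -> 0 < G0 ->
  let e0 := eta0_of al m n lam kappa G0 in
  let T0 := Rpower (cc al m n lam) (-(1/(1+al))) * Rpower G0 (m/(1+al)) * Rpower (aa al m n lam * G0) ((1+n)/(1+al)) in
  let G2 := G0 * (kappa * y1 al m n lam) * exp (-2*e0) * / lam in
  FL (at_right 0) (fun xi => dGF al m n lam p q r s e0 xi / xi) G2 /\
  FL (at_right 0) (fun xi => dTF al m n lam p q r s e0 xi / xi)
     (T0 * (kappa * y1 al m n lam * s0 al m n lam + r0 al m n lam * (kappa * z1 al m n lam)) * exp (-2*e0) * / lam) /\
  FL (at_right 0) (fun xi => dSF al m n lam p q r s e0 xi / xi) ((bb al m n lam + lam) * (aa al m n lam * G0)) /\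
  FL (at_right 0) (fun xi => dUF al m n lam p q r s e0 xi / xi)
     (G2 * r0 al m n lam + G0 * (kappa * (2 * y1 al m n lam)) * exp (-2*e0)).
Proof.
  intros HS HG0 e0 T0 G2.
  pose proof HS as ((Hn & Hl & HD & Ha & Hb) & Hal & (g1 & g2 & g3 & g4 & g5 & g6 & g7 & g8 & g9) & _ & Hk & _ & HP).
  destruct (FLm_facts _ _ _ _ _ _ _ _ _ HS) as (F1 & F2 & F3 & F4 & F5 & F6 & F7 & F8).
  destruct (near0_basic _ _ _ _ _ _ _ _ _ _ HS HG0) as (LG & LU & LT & LS & LV & LV0). fold e0 in LG, LU, LT, LS, LV, LV0.
  fold T0 in LT.
  pose proof (FLc _ e0 _ F1) as C1. pose proof (FLc _ e0 _ F2) as C2.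
  pose proof (FLc _ e0 _ F3) as C3. pose proof (FLc _ e0 _ F4) as C4.
  pose proof (FLc _ e0 _ F7) as C7. pose proof (FLc _ e0 _ F8) as C8.
  simpl in C1, C2, C3, C4, C7, C8.
  assert (Hr0 : 0 < r0 al m n lam) by (unfold r0; auto).
  assert (LdG : FL (at_right 0) (fun xi => dGF al m n lam p q r s e0 xi / xi) G2).
  { apply (FL_eq_at (fun xi => GammaF al m n p r s e0 xi * (exp (-2*(ln xi - e0)) * (r (ln xi - e0) - r0 al m n lam)) * exp (-2*e0) * / lam) _
       (G0 * (kappa * y1 al m n lam) * exp (-2*e0) * / lam)).
    eapply filter_imp; [|exact at_right_pos]. intros x Hx. simpl.
    unfold dGF, at_log. transitivity (GammaF al m n p r s e0 x * (r (ln x - e0) - r0 al m n lam) * / (x * x) * / lam).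
    rewrite (inv_xi2 x e0) by auto. ring. unfold r0. field. split; lra. reflexivity.
    frs. }
  split; [exact LdG|]. split.
  { apply (FL_eq_at (fun xi => ThetaF al m n p r s e0 xi * (exp (-2*(ln xi - e0)) * (r (ln xi - e0) - r0 al m n lam) * s (ln xi - e0)
         + r0 al m n lam * (exp (-2*(ln xi - e0)) * (s (ln xi - e0) - s0 al m n lam))) * exp (-2*e0) * / lam) _
       (T0 * (kappa * y1 al m n lam * s0 al m n lam + r0 al m n lam * (kappa * z1 al m n lam)) * exp (-2*e0) * / lam)).
    eapply filter_imp; [|exact at_right_pos]. intros x Hx. simpl.
    unfold dTF, at_log. rewrite cc_eq by lra.
    transitivity (ThetaF al m n p r s e0 x * ((r (ln x - e0) - r0 al m n lam) * s (ln x - e0) + r0 al m n lam * (s (ln x - e0) - s0 al m n lam)) * / (x * x) * / lam).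
    rewrite (inv_xi2 x e0) by auto. ring. unfold r0. field. split; lra. reflexivity.
    frs. }
  split.
  { apply (FL_eq_at (fun xi => bb al m n lam * (VF al m n lam p q r s e0 xi / xi) + lam * UF al m n p r s e0 xi) _
       (bb al m n lam * (aa al m n lam * G0) + lam * (aa al m n lam * G0))).
    eapply filter_imp; [|exact at_right_pos]. intros x Hx. simpl. unfold dSF. field. lra.
    ring. frs. }
  set (AA := fun x => r x * ((exp (-2*x) * (r x - r0 al m n lam)) * (K1 al m n lam + al/lam*(s x - (1+m+n)/(1+al)))
    + lam * (exp (-2*x) * (p x - 0)) * r x + exp (-2*x) * (q x - 0) + al/lam * r0 al m n lam * (exp (-2*x) * (s x - s0 al m n lam)))).
  assert (FA : FL (Rbar_locally m_infty) AA (r0 al m n lam * ((kappa * y1 al m n lam) * (K1 al m n lam + al/lam*(s0 al m n lam - (1+m+n)/(1+al)))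
    + lam * (kappa * 1) * r0 al m n lam + kappa * (bb al m n lam * r0 al m n lam) + al/lam * r0 al m n lam * (kappa * z1 al m n lam)))).
  { unfold AA. frs. }
  pose proof (FLc _ e0 _ FA) as CA.
  apply (FL_eq_at (fun xi => dGF al m n lam p q r s e0 xi / xi * r (ln xi - e0) + GammaF al m n p r s e0 xi * AA (ln xi - e0) * exp (-2*e0) * / n) _
    (G2 * r0 al m n lam + G0 * (r0 al m n lam * ((kappa * y1 al m n lam) * (K1 al m n lam + al/lam*(s0 al m n lam - (1+m+n)/(1+al)))
    + lam * (kappa * 1) * r0 al m n lam + kappa * (bb al m n lam * r0 al m n lam) + al/lam * r0 al m n lam * (kappa * z1 al m n lam))) * exp (-2*e0) * / n)).
  - eapply filter_imp; [|exact at_right_pos]. intros x Hx. simpl.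
    unfold dUF, at_log. rewrite (Frdec al m n lam) by lra.
    transitivity (dGF al m n lam p q r s e0 x / x * r (ln x - e0) + GammaF al m n p r s e0 x *
      (r (ln x - e0) * ((r (ln x - e0) - r0 al m n lam) * (K1 al m n lam + al / lam * (s (ln x - e0) - (1 + m + n) / (1 + al))) +
        lam * p (ln x - e0) * r (ln x - e0) + q (ln x - e0) + al / lam * r0 al m n lam * (s (ln x - e0) - s0 al m n lam))) * / (x * x) * / n).
    rewrite (inv_xi2 x e0) by auto. unfold AA, K1. ring.
    unfold K1. field. repeat split; lra.
  - rewrite <- (eig al m n lam) by (try lra; unfold r0; lra). unfold K1. field. lra.
  - unfold G2. frs.
Qed.

Lemma decr_on (f f' : R -> R) a : (forall x, a <= x -> is_derive f x (f' x)) -> (forall x, a <= x -> f' x <= 0) ->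
  forall x, a <= x -> f x <= f a.
Proof. intros Hd Hn x Hx. destruct (Req_dec a x) as [E|E]. subst; lra.
  destruct (MVT_cor2 f f' a x) as [c [Hc1 Hc2]]. lra. intros c Hc. apply D_to, Hd. lra.
  assert (f' c * (x - a) <= 0). { apply Rmult_le_0_r. apply Hn; lra. lra. } lra. Qed.

Lemma ln_bound x lo hi : 0 < lo -> lo < x -> x < hi -> Rabs (ln x) <= Rabs (ln lo) + Rabs (ln hi).
Proof. intros H1 H2 H3. assert (ln lo < ln x) by (apply ln_increasing; lra).
  assert (ln x < ln hi) by (apply ln_increasing; lra).
  pose proof (Rabs_pos (ln lo)). pose proof (Rabs_pos (ln hi)).
  pose proof (Rle_abs (ln hi)) as A1. pose proof (Rle_abs (- ln lo)) as A2. rewrite Rabs_Ropp in A2.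
  apply Rabs_le. lra. Qed.

Lemma exp_le_mono x y : x <= y -> exp x <= exp y.
Proof. intros H. destruct (Rle_lt_or_eq_dec _ _ H) as [H1|H1]. apply Rlt_le, exp_increasing; auto. subst; lra. Qed.

Definition Phi al m n (p q r s : R -> R) (x : R) :=
  ln (p x) + (1+m+n)/(al-m-n) * x - n/(al-m-n) * ln (r x) - al/(al-m-n) * ln (s x) - Dd al m n/(al-m-n) * ln (q x).

Lemma Phi_deriv al m n lam p q r s x : PH al m n lam -> 0 < al - m - n -> solves_S al m n lam p q r s -> POS p q r s ->
  is_derive (Phi al m n p q r s) x (- (Dd al m n * bb al m n lam / (al-m-n)) * p x * r x / q x).
Proof. intros (Hn & Hl & HD & Ha & Hb) He HS HP. destruct (HS x) as (Dp & Dq & Dr & Ds). destruct (HP x) as (P1 & P2 & P3 & P4).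
  apply D_of in Dp, Dq, Dr, Ds. unfold Phi. eapply D_eq.
  apply D_minus. apply D_minus. apply D_minus. apply D_plus.
  apply D_ln. exact Dp. auto.
  apply D_scal. apply D_id.
  apply D_scal. apply D_ln. exact Dr. auto.
  apply D_scal. apply D_ln. exact Ds. auto.
  apply D_scal. apply D_ln. exact Dq. auto.
  unfold Fp, Fq, Fr_rhs, Fs, aa, bb. unfold Dd in *. field. repeat split; lra.
Qed.

Lemma Phi_bounds al m n lam p q r s : PH al m n lam -> Good al m lam n -> 0 < al -> -1 < m ->
  solves_S al m n lam p q r s -> POS p q r s ->
  lim_pinfty q 1 -> lim_pinfty r (r1 al m n lam) -> lim_pinfty s (s1 al m n lam) ->
  exists B M, forall x, M < x -> Rabs (Phi al m n p q r s x) <= B /\ Rabs (ln (q x)) <= B /\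
     Rabs (ln (r x)) <= B /\ Rabs (ln (s x)) <= B.
Proof.
  intros HPH HG Hal Hm HS HP Lq Lr Ls.
  pose proof HPH as (Hn & Hl & HD & Ha & Hb). destruct HG as (g1 & g2 & g3 & g4 & g5 & g6 & g7 & g8 & g9).
  set (e := al - m - n) in *. set (k := (1+m+n)/e).
  destruct (Lq (1/2) ltac:(lra)) as [Mq HMq].
  destruct (Lr (r1 al m n lam / 2) ltac:(lra)) as [Mr HMr].
  destruct (Ls (s1 al m n lam / 2) ltac:(lra)) as [Ms HMs].
  set (M0 := Rmax Mq (Rmax Mr Ms)).
  assert (HM0 : forall x, M0 < x -> (1/2 < q x < 2) /\ (r1 al m n lam / 2 < r x < 2 * r1 al m n lam) /\ (s1 al m n lam / 2 < s x < 2 * s1 al m n lam)).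
  { intros x Hx. unfold M0 in Hx.
    assert (Mq < x) by (pose proof (Rmax_l Mq (Rmax Mr Ms)); lra).
    assert (Mr < x) by (pose proof (Rmax_l Mr Ms); pose proof (Rmax_r Mq (Rmax Mr Ms)); lra).
    assert (Ms < x) by (pose proof (Rmax_r Mr Ms); pose proof (Rmax_r Mq (Rmax Mr Ms)); lra).
    specialize (HMq x H). specialize (HMr x H0). specialize (HMs x H1).
    apply Rabs_def2 in HMq, HMr, HMs. repeat split; lra. }
  set (M1 := M0 + 1).
  assert (Hup : forall x, M1 <= x -> Phi al m n p q r s x <= Phi al m n p q r s M1).
  { apply (decr_on _ (fun x => - (Dd al m n * bb al m n lam / e) * p x * r x / q x)).
    intros x _. apply (Phi_deriv al m n lam); auto.
    intros x _. destruct (HP x) as (P1 & P2 & P3 & P4).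
    assert (0 < Dd al m n * bb al m n lam / e) by (apply Rdiv_lt_0_compat; [apply Rmult_lt_0_compat|]; auto).
    assert (0 < (Dd al m n * bb al m n lam / e) * p x * r x / q x) by
      (apply Rdiv_lt_0_compat; [apply Rmult_lt_0_compat; [apply Rmult_lt_0_compat|]|]; auto).
    unfold Rdiv in *. lra. }
  set (Lmax := n/e * ln (2 * r1 al m n lam) + al/e * ln (2 * s1 al m n lam) + Dd al m n / e * ln 2).
  set (C := Dd al m n * bb al m n lam / e * (4 * r1 al m n lam) * exp Lmax).
  assert (Hk : 0 < k) by (unfold k; apply Rdiv_lt_0_compat; lra).
  set (W := fun x => exp (- Phi al m n p q r s x) + C / k * exp (- k * x)).
  set (W' := fun x => exp (- Phi al m n p q r s x) * ((Dd al m n * bb al m n lam / e) * p x * r x / q x) - C * exp (- k * x)).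
  assert (HW : forall x, M1 <= x -> W x <= W M1).
  { apply (decr_on _ W').
    - intros x _. unfold W, W'. eapply D_eq. apply D_plus. apply D_exp. apply (is_derive_opp (Phi al m n p q r s)).
      apply (Phi_deriv al m n lam); auto. apply D_scal. apply D_exp. apply D_scal. apply D_id.
      simpl. unfold opp; simpl. destruct (HP x) as (P1 & P2 & P3 & P4). unfold k, e in *. field. repeat split; lra.
    - intros x Hx. unfold W'. destruct (HP x) as (P1 & P2 & P3 & P4).
      destruct (HM0 x ltac:(unfold M1 in Hx; lra)) as (Q1 & Q2 & Q3).
      assert (E : exp (- Phi al m n p q r s x) * p x = exp (- k * x) * exp (n/e * ln (r x) + al/e * ln (s x) + Dd al m n / e * ln (q x))).
      { rewrite <- exp_plus. rewrite <- (exp_ln (p x)) at 1 by auto. rewrite <- exp_plus. f_equal. unfold Phi, k. fold e. ring. }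
      assert (El : exp (n/e * ln (r x) + al/e * ln (s x) + Dd al m n / e * ln (q x)) <= exp Lmax).
      { apply exp_le_mono. unfold Lmax.
        assert (ln (r x) <= ln (2 * r1 al m n lam)) by (apply Rlt_le, ln_increasing; lra).
        assert (ln (s x) <= ln (2 * s1 al m n lam)) by (apply Rlt_le, ln_increasing; lra).
        assert (ln (q x) <= ln 2) by (apply Rlt_le, ln_increasing; lra).
        assert (0 < n/e) by (apply Rdiv_lt_0_compat; lra).
        assert (0 < al/e) by (apply Rdiv_lt_0_compat; lra).
        assert (0 < Dd al m n/e) by (apply Rdiv_lt_0_compat; lra).
        apply Rplus_le_compat; [apply Rplus_le_compat|]; apply Rmult_le_compat_l; lra. }
      assert (Erq : r x / q x <= 4 * r1 al m n lam).
      { apply (Rmult_le_reg_r (q x)); auto. unfold Rdiv. rewrite Rmult_assoc, Rinv_l by lra. nra. }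
      assert (0 < Dd al m n * bb al m n lam / e) by (apply Rdiv_lt_0_compat; [apply Rmult_lt_0_compat|]; auto).
      replace (exp (- Phi al m n p q r s x) * (Dd al m n * bb al m n lam / e * p x * r x / q x))
        with ((Dd al m n * bb al m n lam / e) * (r x / q x) * (exp (- Phi al m n p q r s x) * p x)) by (field; lra).
      rewrite E. unfold C.
      assert (0 < exp (- k * x)) by apply exp_pos.
      assert (0 < exp (n / e * ln (r x) + al / e * ln (s x) + Dd al m n / e * ln (q x))) by apply exp_pos.
      assert (Dd al m n * bb al m n lam / e * (r x / q x) <= Dd al m n * bb al m n lam / e * (4 * r1 al m n lam))
        by (apply Rmult_le_compat_l; lra).
      assert (Dd al m n * bb al m n lam / e * (r x / q x) * exp (n / e * ln (r x) + al / e * ln (s x) + Dd al m n / e * ln (q x))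
         <= Dd al m n * bb al m n lam / e * (4 * r1 al m n lam) * exp Lmax).
      { apply Rmult_le_compat; try lra. apply Rmult_le_pos. lra. apply Rdiv_le_0_compat; lra. }
      assert (Dd al m n * bb al m n lam / e * (r x / q x) * (exp (- k * x) * exp (n / e * ln (r x) + al / e * ln (s x) + Dd al m n / e * ln (q x)))
        = Dd al m n * bb al m n lam / e * (r x / q x) * exp (n / e * ln (r x) + al / e * ln (s x) + Dd al m n / e * ln (q x)) * exp (- k * x)) by ring.
      assert (Dd al m n * bb al m n lam / e * (r x / q x) * exp (n / e * ln (r x) + al / e * ln (s x) + Dd al m n / e * ln (q x)) * exp (- k * x)
        <= Dd al m n * bb al m n lam / e * (4 * r1 al m n lam) * exp Lmax * exp (- k * x)) by (apply Rmult_le_compat_r; lra).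
      lra. }
  assert (HWpos : 0 < W M1).
  { unfold W. assert (0 < C / k * exp (- k * M1)).
    { apply Rmult_lt_0_compat; [|apply exp_pos]. apply Rdiv_lt_0_compat; auto. unfold C.
      apply Rmult_lt_0_compat; [|apply exp_pos]. apply Rmult_lt_0_compat; [apply Rdiv_lt_0_compat; [apply Rmult_lt_0_compat|]|]; lra. }
    pose proof (exp_pos (- Phi al m n p q r s M1)). lra. }
  assert (Hlow : forall x, M1 <= x -> - ln (W M1) <= Phi al m n p q r s x).
  { intros x Hx. specialize (HW x Hx). unfold W in HW at 1.
    assert (0 < C / k * exp (- k * x)).
    { apply Rmult_lt_0_compat; [|apply exp_pos]. apply Rdiv_lt_0_compat; auto. unfold C.
      apply Rmult_lt_0_compat; [|apply exp_pos]. apply Rmult_lt_0_compat; [apply Rdiv_lt_0_compat; [apply Rmult_lt_0_compat|]|]; lra. }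
    assert (exp (- Phi al m n p q r s x) <= W M1) by lra.
    assert (- Phi al m n p q r s x <= ln (W M1)).
    { rewrite <- (ln_exp (- Phi al m n p q r s x)). destruct (Rle_lt_or_eq_dec _ _ H0) as [H2|H2].
      apply Rlt_le, ln_increasing; auto. apply exp_pos. rewrite H2; lra. }
    lra. }
  set (Bq := Rabs (ln (1/2)) + Rabs (ln 2)).
  set (Br := Rabs (ln (r1 al m n lam / 2)) + Rabs (ln (2 * r1 al m n lam))).
  set (Bs := Rabs (ln (s1 al m n lam / 2)) + Rabs (ln (2 * s1 al m n lam))).
  set (Bp := Rabs (Phi al m n p q r s M1) + Rabs (ln (W M1))).
  exists (Bp + Bq + Br + Bs), M1. intros x Hx.
  destruct (HM0 x ltac:(unfold M1 in Hx; lra)) as (Q1 & Q2 & Q3).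
  assert (A1 : Rabs (ln (q x)) <= Bq) by (apply (ln_bound (q x) (1/2) 2); lra).
  assert (A2 : Rabs (ln (r x)) <= Br) by (apply (ln_bound (r x) (r1 al m n lam / 2) (2 * r1 al m n lam)); lra).
  assert (A3 : Rabs (ln (s x)) <= Bs) by (apply (ln_bound (s x) (s1 al m n lam / 2) (2 * s1 al m n lam)); lra).
  assert (A4 : Rabs (Phi al m n p q r s x) <= Bp).
  { specialize (Hup x ltac:(lra)). specialize (Hlow x ltac:(lra)). unfold Bp.
    pose proof (Rle_abs (Phi al m n p q r s M1)). pose proof (Rle_abs (ln (W M1))). pose proof (Rabs_pos (Phi al m n p q r s M1)). pose proof (Rabs_pos (ln (W M1))).
    apply Rabs_le. lra. }
  assert (0 <= Bp) by (unfold Bp; pose proof (Rabs_pos (Phi al m n p q r s M1)); pose proof (Rabs_pos (ln (W M1))); lra).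
  assert (0 <= Bq) by (unfold Bq; pose proof (Rabs_pos (ln (1/2))); pose proof (Rabs_pos (ln 2)); lra).
  assert (0 <= Br) by (unfold Br; pose proof (Rabs_pos (ln (r1 al m n lam / 2))); pose proof (Rabs_pos (ln (2 * r1 al m n lam))); lra).
  assert (0 <= Bs) by (unfold Bs; pose proof (Rabs_pos (ln (s1 al m n lam / 2))); pose proof (Rabs_pos (ln (2 * s1 al m n lam))); lra).
  repeat split; lra.
Qed.

Lemma abs_mul_le a b B : Rabs b <= B -> a * b <= Rabs a * B.
Proof. intros H. eapply Rle_trans. apply Rle_abs. rewrite Rabs_mult. apply Rmult_le_compat_l. apply Rabs_pos. auto. Qed.

Lemma bigO_Ev al m n (p q r s : R -> R) eta0 K c0 cp cq cr cs gam (g : R -> R) :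
  0 < al - m - n ->
  gam = c0 - (1+m+n)/(al-m-n) * cp ->
  (forall xi, 0 < xi -> g xi = Rpower xi gam) ->
  POS p q r s ->
  (exists B M, forall x, M < x -> Rabs (Phi al m n p q r s x) <= B /\ Rabs (ln (q x)) <= B /\
     Rabs (ln (r x)) <= B /\ Rabs (ln (s x)) <= B) ->
  bigO_infty (fun xi => K * Ev c0 cp cq cr cs p q r s eta0 xi) g.
Proof.
  intros He Hgam Hg HP [B [M HB]].
  set (e := al - m - n) in *. set (k := (1+m+n)/e) in *.
  set (Eb := Rabs (cp * k * eta0) + Rabs cp * B + Rabs (cq + cp * (Dd al m n / e)) * B + Rabs (cr + cp * (n/e)) * B + Rabs (cs + cp * (al/e)) * B).
  exists (Rabs K * exp Eb), (exp (M + eta0)). intros xi Hxi.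
  assert (Hx0 : 0 < xi) by (pose proof (exp_pos (M + eta0)); lra).
  assert (Heta : M < ln xi - eta0).
  { assert (ln (exp (M + eta0)) < ln xi) by (apply ln_increasing; auto; apply exp_pos). rewrite ln_exp in H. lra. }
  destruct (HB _ Heta) as (B1 & B2 & B3 & B4).
  destruct (HP (ln xi - eta0)) as (P1 & P2 & P3 & P4).
  set (E := cp * k * eta0 + cp * Phi al m n p q r s (ln xi - eta0) + (cq + cp * (Dd al m n / e)) * ln (q (ln xi - eta0))
       + (cr + cp * (n/e)) * ln (r (ln xi - eta0)) + (cs + cp * (al/e)) * ln (s (ln xi - eta0))).
  assert (HE : Ev c0 cp cq cr cs p q r s eta0 xi = exp E * Rpower xi gam).
  { unfold Ev, Rpower, at_log. rewrite <- exp_plus. f_equal. unfold E, Phi. fold e. rewrite Hgam. fold k. unfold k. field. lra. }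
  assert (HEb : E <= Eb).
  { unfold E, Eb. pose proof (Rle_abs (cp * k * eta0)).
    pose proof (abs_mul_le cp _ B B1). pose proof (abs_mul_le (cq + cp * (Dd al m n / e)) _ B B2).
    pose proof (abs_mul_le (cr + cp * (n/e)) _ B B3). pose proof (abs_mul_le (cs + cp * (al/e)) _ B B4). lra. }
  rewrite Hg by auto. rewrite HE. rewrite !Rabs_mult. rewrite (Rabs_right (exp E)) by (apply Rle_ge, Rlt_le, exp_pos).
  assert (0 <= Rabs (Rpower xi gam)) by apply Rabs_pos.
  assert (exp E <= exp Eb) by (apply exp_le_mono; auto).
  rewrite <- Rmult_assoc. apply Rmult_le_compat_r; auto. apply Rmult_le_compat_l; auto. apply Rabs_pos.
Qed.

Lemma bigO_ext (f f' g : R -> R) : (forall x, f x = f' x) -> bigO_infty f' g -> bigO_infty f g.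
Proof. intros H [C [M HM]]. exists C, M. intros x Hx. rewrite H. auto. Qed.

Theorem proposition9p1 (al m lam : R)
  (Hal : 0 < al) (Hm : -1 < m) (Halm : m < al)
  (Hlam0 : 0 < lam) (Hlam1 : lam < 2*(al - m)/(1 + m)) :
  exists n1, 0 < n1 /\
  forall n, 0 < n < n1 ->
  forall (p q r s : R -> R) (kappa : R),
    heteroclinic_M0_M1 al m n lam p q r s ->
    0 < kappa ->
    leaves_M0_along_X01 al m n lam kappa p q r s ->
  forall G0 : R, 0 < G0 ->
    let D := Dd al m n in
    let a := aa al m n lam in
    let b := bb al m n lam in
    let c := cc al m n lam in
    let U0 := a * G0 in
    let T0 := Rpower c (-(1/(1+al))) * Rpower G0 (m/(1+al))
              * Rpower U0 ((1+n)/(1+al)) in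
    let S0 := Rpower c (al/(1+al)) * Rpower G0 (m/(1+al))
              * Rpower U0 (-((al-n)/(1+al))) in
    exists eta0 : R,
    let Gm := GammaF al m n p r s eta0 in
    let V := VF al m n lam p q r s eta0 in
    let Th := ThetaF al m n p r s eta0 in
    let Sg := SigmaF al m n p r s eta0 in
    let U := UF al m n p r s eta0 in
    exists dG dT dS dU : R -> R,
    (forall xi, 0 < xi ->
       derivable_pt_lim Gm xi (dG xi) /\ derivable_pt_lim Th xi (dT xi) /\
       derivable_pt_lim Sg xi (dS xi) /\ derivable_pt_lim U xi (dU xi)) /\
    (forall xi, 0 < xi ->
       derivable_pt_lim V xi (U xi) /\
       dS xi = b * V xi + lam * xi * U xi /\
       c * Th xi + lam * xi * dT xi = Sg xi * U xi /\
       a * Gm xi + lam * xi * dG xi = U xi /\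
       Sg xi = Rpower (Th xi) (-al) * Rpower (Gm xi) m * Rpower (U xi) n) /\
    (exists G2 T2 U2 : R,
       let S2 := (b + lam) * U0 in
       expansion0 Gm dG G0 G2 /\ G2 < 0 /\
       expansion0 Th dT T0 T2 /\ T2 < 0 /\
       expansion0 Sg dS S0 S2 /\ 0 < S2 /\
       expansion0 U dU U0 U2 /\ U2 < 0 /\
       rlim0 V 0 /\
       rlim0 (fun xi => (V xi - U0 * xi - U2 * xi^3 / 6) / xi^3) 0) /\
    (let e := al - m - n in
     let k := (1+m+n)/e in
     ((k <> 1 \/ (k = 1 /\ b = lam)) ->
        bigO_infty Gm (fun xi => Rpower xi (-((1+al)/e))) /\
        bigO_infty U (fun xi => Rpower xi (-((1+al)/e))) /\
        bigO_infty V (fun _ => 1) /\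
        bigO_infty Th (fun xi => Rpower xi (-((1+m+n)/e))) /\
        bigO_infty Sg (fun xi => xi)) /\
     ((k = 1 /\ b <> lam) ->
        bigO_infty Gm (fun xi => Rpower xi (-((1+al)/e)) * Rpower (ln xi) ((1+al)/D)) /\
        bigO_infty U (fun xi => Rpower xi (-((1+al)/e)) * Rpower (ln xi) ((1+al)/D)) /\
        bigO_infty V (fun xi => Rpower (ln xi) (-(e/D))) /\
        bigO_infty Th (fun xi => Rpower xi (-((1+m+n)/e)) * Rpower (ln xi) ((1+m+n)/D)) /\
        bigO_infty Sg (fun xi => xi * Rpower (ln xi) (-(e/D))))).
Proof.
  destruct (exists_n1 al m lam Hal Hm Halm Hlam0 Hlam1) as [n1 [Hn1 Hgood]].
  exists n1. split; auto.
  intros n Hn p q r s kappa Hhet Hk Hlv G0 HG0.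
  intros D a b c U0 T0 S0.
  pose proof (Hgood n Hn) as HG. pose proof HG as (g1 & g2 & g3 & g4 & g5 & g6 & g7 & g8 & g9).
  assert (HPH : PH al m n lam) by (unfold PH; repeat split; try lra; intro; lra).
  pose proof HPH as (Hn0 & Hl0 & HD & Ha & Hb).
  assert (Hr0 : 0 < r0 al m n lam) by (unfold r0; auto).
  assert (HP : POS p q r s).
  { intros x. apply (orbit_pos al m n lam p q r s kappa); auto; lra. }
  assert (HSU : SETUP al m n lam p q r s kappa) by exact (conj HPH (conj Hal (conj HG (conj Hhet (conj Hk (conj Hlv HP)))))).
  pose proof Hhet as (HS & _ & _ & _ & _ & _ & Lq1 & Lr1 & Ls1).
  destruct (Good_y1z1 al m lam n Hal Hm Hlam0 ltac:(lra) HG) as [Hy1 Hz1].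
  set (e0 := eta0_of al m n lam kappa G0).
  exists e0.
  intros Gm V Th Sg U.
  exists (dGF al m n lam p q r s e0), (dTF al m n lam p q r s e0), (dSF al m n lam p q r s e0), (dUF al m n lam p q r s e0).
  destruct (near0_basic _ _ _ _ _ _ _ _ _ _ HSU HG0) as (LG & LU & LT & LS & LV & LV0). fold e0 in LG, LU, LT, LS, LV, LV0.
  destruct (near0_derivs _ _ _ _ _ _ _ _ _ _ HSU HG0) as (LdG & LdT & LdS & LdU). fold e0 in LdG, LdT, LdS, LdU.
  split; [|split; [|split]].
  - intros xi Hxi. repeat split; apply D_to.
    apply dG_ok; auto. apply dT_ok; auto. apply dS_ok; auto. apply dU_ok; auto.
  - intros xi Hxi. split; [|split; [|split; [|split]]].
    + apply D_to. apply dV_ok; auto.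
    + reflexivity.
    + unfold Sg, U, Th, c. rewrite (SU_eq _ _ _ _ q) by auto. unfold dTF. field. lra.
    + unfold U, Gm, a. rewrite (U_eq _ _ _ _ q) by auto. unfold dGF. field. lra.
    + unfold Sg, Th, Gm, U. apply (Sig_rel _ _ _ _ q). lra.
  - set (G2 := G0 * (kappa * y1 al m n lam) * exp (-2*e0) * / lam) in *.
    set (T2 := T0 * (kappa * y1 al m n lam * s0 al m n lam + r0 al m n lam * (kappa * z1 al m n lam)) * exp (-2*e0) * / lam).
    set (U2 := G2 * r0 al m n lam + G0 * (kappa * (2 * y1 al m n lam)) * exp (-2*e0)) in *.
    exists G2, T2, U2. intros S2.
    assert (HE : 0 < exp (-2*e0)) by apply exp_pos.
    assert (Hil : 0 < / lam) by (apply Rinv_0_lt_compat; lra).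
    assert (Hky : 0 < kappa * (- y1 al m n lam)) by (apply Rmult_lt_0_compat; lra).
    assert (Hkz : 0 < kappa * (- z1 al m n lam)) by (apply Rmult_lt_0_compat; lra).
    assert (HG2 : G2 < 0).
    { assert (0 < G0 * (kappa * (- y1 al m n lam)) * exp (-2*e0) * / lam) by
        (repeat apply Rmult_lt_0_compat; auto; lra).
      unfold G2. replace (G0 * (kappa * y1 al m n lam) * exp (-2*e0) * / lam) with
        (- (G0 * (kappa * (- y1 al m n lam)) * exp (-2*e0) * / lam)) by ring. lra. }
    assert (HT0 : 0 < T0).
    { unfold T0. apply Rmult_lt_0_compat; [apply Rmult_lt_0_compat|]; apply exp_pos. }
    assert (HU0 : 0 < U0) by (unfold U0, a; apply Rmult_lt_0_compat; auto).
    split; [|split; [|split; [|split; [|split; [|split; [|split; [|split; [|split]]]]]]]].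
    + apply expansion_from; auto. intros x Hx. apply dG_ok; auto.
    + exact HG2.
    + apply expansion_from; auto. intros x Hx. apply dT_ok; auto.
    + assert (0 < T0 * (kappa * (- y1 al m n lam) * s0 al m n lam + r0 al m n lam * (kappa * (- z1 al m n lam))) * exp (-2*e0) * / lam).
      { apply Rmult_lt_0_compat; auto. apply Rmult_lt_0_compat; auto. apply Rmult_lt_0_compat; auto.
        assert (0 < kappa * (- y1 al m n lam) * s0 al m n lam) by (apply Rmult_lt_0_compat; auto).
        assert (0 < r0 al m n lam * (kappa * (- z1 al m n lam))) by (apply Rmult_lt_0_compat; auto). lra. }
      unfold T2. replace (T0 * (kappa * y1 al m n lam * s0 al m n lam + r0 al m n lam * (kappa * z1 al m n lam)) * exp (-2*e0) * / lam)
        with (- (T0 * (kappa * (- y1 al m n lam) * s0 al m n lam + r0 al m n lam * (kappa * (- z1 al m n lam))) * exp (-2*e0) * / lam)) by ring. lra.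
    + apply expansion_from; auto. intros x Hx. apply dS_ok; auto.
    + unfold S2, b. apply Rmult_lt_0_compat; auto. lra.
    + apply expansion_from; auto. intros x Hx. apply dU_ok; auto.
    + assert (0 < - G2 * r0 al m n lam) by (apply Rmult_lt_0_compat; lra).
      assert (0 < G0 * (kappa * - y1 al m n lam) * exp (-2*e0)) by (repeat apply Rmult_lt_0_compat; auto; lra).
      unfold U2. replace (G2 * r0 al m n lam + G0 * (kappa * (2 * y1 al m n lam)) * exp (-2*e0)) with
        (- (- G2 * r0 al m n lam + 2 * (G0 * (kappa * - y1 al m n lam) * exp (-2*e0)))) by ring. lra.
    + apply FL_rlim0; auto.
    + apply FL_rlim0. apply (expansion_V V U U0 U2).
      intros x Hx. apply dV_ok; auto. auto.
      assert (HU : expansion0 U (dUF al m n lam p q r s e0) U0 U2).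
      { apply expansion_from; auto. intros x Hx. apply dU_ok; auto. }
      destruct HU as (_ & _ & _ & HU). apply rlim0_FL. exact HU.
  - intros e k. split.
    + intros _.
      destruct (Phi_bounds al m n lam p q r s HPH HG Hal Hm HS HP Lq1 Lr1 Ls1) as [B [M HB]].
      assert (HBB : exists B M, forall x, M < x -> Rabs (Phi al m n p q r s x) <= B /\ Rabs (ln (q x)) <= B /\ Rabs (ln (r x)) <= B /\ Rabs (ln (s x)) <= B) by (exists B, M; exact HB).
      repeat split.
      * apply (bigO_ext _ (fun xi => 1 * Ev (-a1 al m n) ((1+al)/Dd al m n) 0 (n/Dd al m n) (al/Dd al m n) p q r s e0 xi)).
        intros x. unfold Gm. rewrite (GammaF_Ev _ _ _ _ q). ring.
        apply (bigO_Ev al m n p q r s e0 1 _ _ _ _ _ (-((1+al)/e))); auto.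
        unfold e, a1. unfold Dd in *. field. split; lra.
      * apply (bigO_ext _ (fun xi => 1 * Ev (-a1 al m n) ((1+al)/Dd al m n) 0 (1 + n/Dd al m n) (al/Dd al m n) p q r s e0 xi)).
        intros x. unfold U. rewrite (UF_Ev _ _ _ _ q). ring.
        apply (bigO_Ev al m n p q r s e0 1 _ _ _ _ _ (-((1+al)/e))); auto.
        unfold e, a1. unfold Dd in *. field. split; lra.
      * apply (bigO_ext _ (fun xi => / bb al m n lam * Ev (- b1 al m n) (-(al-m-n)/Dd al m n) 1 (n/Dd al m n) (al/Dd al m n) p q r s e0 xi)).
        intros x. unfold V. rewrite (VF_Ev _ _ _ _ _ _ _ _ _ _ HP). reflexivity.
        apply (bigO_Ev al m n p q r s e0 _ _ _ _ _ _ 0); auto.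
        unfold b1. unfold Dd in *. field. split; lra.
        intros xi Hxi. rewrite Rpower_O; auto.
      * apply (bigO_ext _ (fun xi => 1 * Ev (- Defs.c1 al m n) ((1+m+n)/Dd al m n) 0 (2*n/Dd al m n) (-(1-m-n)/Dd al m n) p q r s e0 xi)).
        intros x. unfold Th. rewrite (ThetaF_Ev _ _ _ _ q). ring.
        apply (bigO_Ev al m n p q r s e0 1 _ _ _ _ _ (-((1+m+n)/e))); auto.
        unfold e, Defs.c1. unfold Dd in *. field. split; lra.
      * apply (bigO_ext _ (fun xi => 1 * Ev (- Defs.d1 al m n) (-(al-m-n)/Dd al m n) 0 (n/Dd al m n) (al/Dd al m n) p q r s e0 xi)).
        intros x. unfold Sg. rewrite (SigmaF_Ev _ _ _ _ q). ring.
        apply (bigO_Ev al m n p q r s e0 1 _ _ _ _ _ 1); auto.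
        unfold Defs.d1. unfold Dd in *. field. split; lra.
        intros xi Hxi. rewrite Rpower_1; auto.
    + intros [Hk1 _]. exfalso. apply g9.
      assert (E1 : 1 + m + n = k * e) by (unfold k; field; unfold e; lra).
      rewrite Hk1 in E1. unfold e in E1. lra.
Qed.
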